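(* The map $\Psi\colon A\times J\to\widehat\Pi_C$, $\Psi((y,s),t)=\iota_t(\Psi_t(y,s))$, is a slice-preserving homeomorphism. In particular, each $\Psi_t\colon A\to\hat D_t\setminus\hat I_t$ is a homeomorphism.
   Context: Setup: $I=[-1,1]$, $J=(1,2]$, $f_t(x)=\min(t(x-1)+3,\,t(1-x)-1)$. $S$ is the circle of radius 2 with angular coordinate $y$; $D$ is the disk of radius 2 with coordinates $(y,s)\in S\times[0,1]$ (from a smooth embedding of the mapping cylinder of $y\mapsto\cos y$), $(y,0)=y\in S$, $(y,1)=\cos y\in I\subset D$. $\Upsilon(y,s)=(y,2s)$ for $s\le1/2$, $(y,1)$ for $s\ge1/2$. An unwrapping is a continuously varying (in $t$) family of orientation-preserving near-homeomorphisms $\bar f_t\colon D\to D$ with $\bar f_t$ injective on $I$, $\bar f_t(I)\subset\{s\ge1/2\}$, $\Upsilon\circ\bar f_t|_I=f_t$, the second coordinate of $\bar f_t(y,s)$ equal to $s$ for $s\le1/2$; assume moreover $\bar f_t=\mathrm{id}$ on $S\times[0,3/4]$. $H_t=\Upsilon\circ\bar f_t$, $\hat D_t=\varprojlim(D,H_t)$, $\hat I_t=\varprojlim(I,f_t)\subset\hat D_t$. Let $\Pi=D\times J$, $H(z,t)=(H_t(z),t)$, $\widehat\Pi=\varprojlim(\Pi,H)$ (threads $\langle w_0,w_1,\dots\rangle$ with $H(w_{n+1})=w_n$, product topology), and $\iota_t\colon\hat D_t\to\widehat\Pi$, $\langle z_0,z_1,\dots\rangle\mapsto\langle(z_0,t),(z_1,t),\dots\rangle$;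 let $\widehat\Pi_C=\widehat\Pi\setminus\bigsqcup_{t\in J}\iota_t(\hat I_t)$. Let $A=S\times[0,\infty)$ and define $\Psi_t\colon A\to\hat D_t\setminus\hat I_t$: for $s\in[0,1)$, $\Psi_t(y,s)=\langle(y,s),(y,s/2),(y,s/4),\dots\rangle$; for $s\ge1$, with $k=\lfloor s\rfloor$, $v=(s-k+1)/2$, $\Psi_t(y,s)=\langle z_0,z_1,\dots\rangle$ where $z_{k-j}=H_t^{\,j}(y,v)$ ($1\le j\le k$), $z_k=(y,v)$, $z_{k+j}=(y,v/2^j)$ ($j\ge1$). Slice-preserving means $\Psi(A\times\{t\})\subset\iota_t(\hat D_t)$. *)

(* Defs.v *)
From Stdlib Require Import Reals Lra Lia ZArith Arith ClassicalEpsilon.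
Open Scope R_scope.

Definition dR (a b : R) : R := Rabs (a - b).
Definition dprod {X Y : Type} (dX : X -> X -> R) (dY : Y -> Y -> R)
  (a b : X * Y) : R := Rmax (dX (fst a) (fst b)) (dY (snd a) (snd b)).
(* max-metric on R^2 (induces the standard topology) *)
Definition d2 : (R * R) -> (R * R) -> R := dprod dR dR.

Definition nbM {X : Type} (d : X -> X -> R) (x : X) (V : X -> Prop) : Prop :=
  exists eps, 0 < eps /\ forall y, d x y < eps -> V y.

(* V is a neighbourhood of the sequence w in the PRODUCT topology on
   nat -> Y, each factor carrying the topology of d
   (basic open sets: finitely many coordinates in balls). *)
Definition nbSeq {Y : Type} (d : Y -> Y -> R) (w : nat -> Y) (V : (nat -> Y) -> Prop)
  : Prop :=
  exists (N : nat) (eps : R), 0 < eps /\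
    forall w', (forall n, (n <= N)%nat -> d (w n) (w' n) < eps) -> V w'.

Definition cont_on {X Y : Type} (nbX : X -> (X -> Prop) -> Prop)
  (nbY : Y -> (Y -> Prop) -> Prop) (A : X -> Prop) (f : X -> Y) : Prop :=
  forall x, A x -> forall V, nbY (f x) V ->
    exists U, nbX x U /\ forall x', A x' -> U x' -> V (f x').

Definition homeo_on {X Y : Type} (nbX : X -> (X -> Prop) -> Prop)
  (nbY : Y -> (Y -> Prop) -> Prop) (A : X -> Prop) (B : Y -> Prop) (f : X -> Y)
  : Prop :=
  (forall x, A x -> B (f x)) /\
  cont_on nbX nbY A f /\
  exists g : Y -> X,
    (forall y, B y -> A (g y) /\ f (g y) = y) /\
    (forall x, A x -> g (f x) = x) /\
    cont_on nbY nbX B g.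

Definition Jint (t : R) : Prop := 1 < t <= 2.
Definition Iint (x : R) : Prop := -1 <= x <= 1.
(* the circle S of radius 2 (a point p of S stands for its angular coordinate y) *)
Definition onS (p : R * R) : Prop := fst p ^ 2 + snd p ^ 2 = 4.
Definition inD (z : R * R) : Prop := fst z ^ 2 + snd z ^ 2 <= 4.

Definition ft (t x : R) : R := Rmin (t * (x - 1) + 3) (t * (1 - x) - 1).

(* phi p s is the point with coordinates (y,s), p = (2 cos y, 2 sin y).
   phi is an embedding of the mapping cylinder of y |-> cos y onto D:
   continuous on S x [0,1], onto D, (y,0) = y, and its only identifications
   are (y,1) ~ (y',1) iff cos y = cos y'. *)
Definition cyl_embedding (phi : R * R -> R -> R * R) : Prop :=
  cont_on (nbM (dprod d2 dR)) (nbM d2)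
    (fun q => onS (fst q) /\ 0 <= snd q <= 1) (fun q => phi (fst q) (snd q)) /\
  (forall p, onS p -> phi p 0 = p) /\
  (forall p s, onS p -> 0 <= s <= 1 -> inD (phi p s)) /\
  (forall z, inD z -> exists p s, onS p /\ 0 <= s <= 1 /\ phi p s = z) /\
  (forall p p' s s', onS p -> onS p' -> 0 <= s <= 1 -> 0 <= s' <= 1 ->
     (phi p s = phi p' s' <->
      ((p = p' /\ s = s') \/ (s = 1 /\ s' = 1 /\ fst p = fst p')))).

(* the arc I inside D, and its identification with [-1,1]:  (y,1) = cos y *)
Definition inI (phi : R * R -> R -> R * R) (z : R * R) : Prop :=
  exists p, onS p /\ z = phi p 1.
Definition jI (phi : R * R -> R -> R * R) (x : R) : R * R :=
  phi (2 * x, 2 * sqrt (1 - x ^ 2)) 1.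

(* Upsilon(y,s) = (y, min(2s,1)), read off via the coordinates *)
Definition Ups (phi : R * R -> R -> R * R) (z : R * R) : R * R :=
  let q := epsilon (inhabits ((0, 0), 0))
             (fun q : (R * R) * R =>
                onS (fst q) /\ 0 <= snd q <= 1 /\ phi (fst q) (snd q) = z) in
  phi (fst q) (Rmin (2 * snd q) 1).

Definition homeoD (h : R * R -> R * R) : Prop :=
  homeo_on (nbM d2) (nbM d2) inD inD h.

(* orientation preserving: the boundary circle is mapped with degree +1 *)
Definition OP_homeoD (h : R * R -> R * R) : Prop :=
  homeoD h /\
  exists theta : R -> R, continuity theta /\
    (forall a, theta (a + 2 * PI) = theta a + 2 * PI) /\
    (forall a, h (2 * cos a, 2 * sin a) = (2 * cos (theta a), 2 * sin (theta a))).

Definition OP_near_homeoD (g : R * R -> R * R) : Prop :=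
  (forall z, inD z -> inD (g z)) /\
  forall eps, 0 < eps -> exists h, OP_homeoD h /\
    forall z, inD z -> d2 (g z) (h z) < eps.

Definition unwrapping (phi : R * R -> R -> R * R) (fb : R -> R * R -> R * R) : Prop :=
  cont_on (nbM (dprod dR d2)) (nbM d2)
    (fun q => Jint (fst q) /\ inD (snd q)) (fun q => fb (fst q) (snd q)) /\
  forall t, Jint t ->
    OP_near_homeoD (fb t) /\
    (forall z z', inI phi z -> inI phi z' -> fb t z = fb t z' -> z = z') /\
    (forall z, inI phi z ->
       exists p s, onS p /\ 1/2 <= s <= 1 /\ fb t z = phi p s) /\
    (forall x, Iint x -> Ups phi (fb t (jI phi x)) = jI phi (ft t x)) /\
    (forall p s, onS p -> 0 <= s <= 1/2 ->
       exists p', onS p' /\ fb t (phi p s) = phi p' s).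

Definition Hmap (phi : R * R -> R -> R * R) (fb : R -> R * R -> R * R) (t : R)
  (z : R * R) : R * R := Ups phi (fb t z).

Definition Dhat phi fb (t : R) (z : nat -> R * R) : Prop :=
  forall n, inD (z n) /\ Hmap phi fb t (z (S n)) = z n.

(* iota_t (Ihat_t): threads of the inverse limit of (I, f_t), viewed in Dhat_t *)
Definition Ihat phi (t : R) (z : nat -> R * R) : Prop :=
  exists x : nat -> R,
    (forall n, Iint (x n) /\ ft t (x (S n)) = x n) /\
    (forall n, z n = jI phi (x n)).

Definition Hbig phi fb (w : (R * R) * R) : (R * R) * R :=
  (Hmap phi fb (snd w) (fst w), snd w).

Definition Pihat phi fb (w : nat -> (R * R) * R) : Prop :=
  forall n, inD (fst (w n)) /\ Jint (snd (w n)) /\ Hbig phi fb (w (S n)) = w n.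

Definition iota (t : R) (z : nat -> R * R) : nat -> (R * R) * R :=
  fun n => (z n, t).

Definition PihatC phi fb (w : nat -> (R * R) * R) : Prop :=
  Pihat phi fb w /\
  ~ (exists t z, Jint t /\ Dhat phi fb t z /\ Ihat phi t z /\ w = iota t z).

Definition inA (a : (R * R) * R) : Prop := onS (fst a) /\ 0 <= snd a.

Definition Psit phi fb (t : R) (a : (R * R) * R) : nat -> R * R :=
  let p := fst a in
  let s := snd a in
  if Rlt_dec s 1 then (fun n => phi p (s / 2 ^ n))
  else
    let k := Z.to_nat (Int_part s) in
    let v := (s - INR k + 1) / 2 in
    fun n => if (n <=? k)%nat then Nat.iter (k - n) (Hmap phi fb t) (phi p v)
             else phi p (v / 2 ^ (n - k)).

Definition inAJ (b : ((R * R) * R) * R) : Prop := inA (fst b) /\ Jint (snd b).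

Definition Psi phi fb (b : ((R * R) * R) * R) : nat -> (R * R) * R :=
  iota (snd b) (Psit phi fb (snd b) (fst b)).

Definition nbA := nbM (dprod d2 dR).
Definition nbAJ := nbM (dprod (dprod d2 dR) dR).
Definition nbPi := nbSeq (dprod d2 dR).
Definition nbDh := nbSeq d2.

(* Main.v *)
From Stdlib Require Import Reals Lra Lia ZArith ClassicalEpsilon Classical FunctionalExtensionality.
Require Import Defs.
Open Scope R_scope.

Definition incr (f : nat -> nat) := forall n, (f n < f (S n))%nat.

Lemma incr_ge f : incr f -> forall n, (n <= f n)%nat.
Proof. intros H n; induction n; [lia|]. specialize (H n); lia. Qed.

Lemma incr_mono f : incr f -> forall n m, (n <= m)%nat -> (f n <= f m)%nat.
Proof. intros H n m Hnm; induction Hnm; [lia|]. specialize (H m); lia. Qed.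

Lemma incr_comp f g : incr f -> incr g -> incr (fun n => f (g n)).
Proof.
  intros Hf Hg n. pose proof (Hg n).
  assert (forall a b, (a < b)%nat -> (f a < f b)%nat).
  { intros a b Hab. induction Hab. apply Hf. specialize (Hf m); lia. }
  auto.
Qed.

Definition cvs (u : nat -> R) (l : R) :=
  forall e, 0 < e -> exists N, forall n, (N <= n)%nat -> Rabs (u n - l) < e.

Lemma cvs_sub u l f : incr f -> cvs u l -> cvs (fun n => u (f n)) l.
Proof.
  intros Hf H e He. destruct (H e He) as [N HN]. exists N. intros n Hn.
  apply HN. pose proof (incr_ge f Hf n). lia.
Qed.

Lemma adh_step (u : nat -> R) l : ValAdh u l ->
  forall (k N : nat), exists p, (N <= p)%nat /\ Rabs (u p - l) < / INR (S k).
Proof.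
  intros H k N.
  assert (Hpos : 0 < / INR (S k)) by (apply Rinv_0_lt_compat; apply lt_0_INR; lia).
  destruct (H (fun x => Rabs (x - l) < / INR (S k)) N) as [p [Hp Hv]].
  { exists (mkposreal _ Hpos). intros x Hx. unfold disc in Hx. simpl in Hx.
    unfold R_dist in Hx. exact Hx. }
  eauto.
Qed.

Lemma BW1 (u : nat -> R) (M : R) : (forall n, Rabs (u n) <= M) ->
  exists f l, incr f /\ cvs (fun n => u (f n)) l.
Proof.
  intros HM.
  destruct (Bolzano_Weierstrass u (fun c => -M <= c <= M) (compact_P3 _ _))
    as [l Hl].
  { intros n. specialize (HM n). unfold Rabs in HM; destruct (Rcase_abs (u n)); lra. }
  pose proof (adh_step u l Hl) as Hs.
  set (pick := fun k N => proj1_sig (constructive_indefinite_description _ (Hs k N))).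
  assert (Hpick : forall k N, (N <= pick k N)%nat /\ Rabs (u (pick k N) - l) < / INR (S k)).
  { intros k N. unfold pick. destruct (constructive_indefinite_description _ _). simpl. auto. }
  set (f := fix f n := match n with O => pick O O | S m => pick (S m) (S (f m)) end).
  exists f, l. split.
  - intros n. simpl. destruct (Hpick (S n) (S (f n))). lia.
  - intros e He.
    destruct (archimed_cor1 e He) as [N [HN HN0]].
    exists N. intros n Hn.
    assert (Hn' : Rabs (u (f n) - l) < / INR (S n)).
    { destruct n; simpl; apply Hpick. }
    eapply Rlt_le_trans; [exact Hn'|].
    apply Rle_trans with (/ INR N); [|lra].
    apply Rinv_le_contravar. apply lt_0_INR; lia. apply le_INR; lia.
Qed.

Lemma cvs_Un u l : cvs u l <-> Un_cv u l.
Proof. unfold cvs, Un_cv, R_dist. split; intros H e He; destruct (H e He) as [N HN]; exists N; intros n Hn; apply HN; lia. Qed.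

Lemma cvs_le u l b : (forall n, u n <= b) -> cvs u l -> l <= b.
Proof.
  intros Hb Hc. destruct (Rle_lt_dec l b) as [|Hlt]; auto.
  destruct (Hc (l - b)) as [N HN]; [lra|]. specialize (HN N (le_n _)). specialize (Hb N).
  unfold Rabs in HN; destruct (Rcase_abs _); lra.
Qed.

Lemma cvs_ge u l b : (forall n, b <= u n) -> cvs u l -> b <= l.
Proof.
  intros Hb Hc. destruct (Rle_lt_dec b l) as [|Hlt]; auto.
  destruct (Hc (b - l)) as [N HN]; [lra|]. specialize (HN N (le_n _)). specialize (Hb N).
  unfold Rabs in HN; destruct (Rcase_abs _); lra.
Qed.

Lemma cvs_unique u l1 l2 : cvs u l1 -> cvs u l2 -> l1 = l2.
Proof. intros H1 H2. apply cvs_Un in H1. apply cvs_Un in H2. eapply UL_sequence; eauto. Qed.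

Lemma cvs_const_eq u l c : (forall n, u n = c) -> cvs u l -> l = c.
Proof. intros Hu H. apply (cvs_unique u); auto. intros e He. exists O. intros n _. rewrite Hu. unfold Rminus; rewrite Rplus_opp_r, Rabs_R0. lra. Qed.

Lemma cvs_sq_sum u v a b : cvs u a -> cvs v b -> cvs (fun n => u n ^ 2 + v n ^ 2) (a ^ 2 + b ^ 2).
Proof.
  intros Hu Hv. apply cvs_Un in Hu. apply cvs_Un in Hv. apply cvs_Un.
  apply CV_plus; simpl; apply CV_mult; auto; apply CV_mult; auto; intros e He; exists O; intros; unfold R_dist; rewrite Rminus_diag, Rabs_R0; lra.
Qed.

Definition d3 := dprod d2 dR.
Definition isC (c : (R * R) * R) : Prop := onS (fst c) /\ 0 <= snd c <= 1.
Definition cv3 (u : nat -> (R * R) * R) (c : (R * R) * R) :=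
  forall e, 0 < e -> exists N, forall n, (N <= n)%nat -> d3 c (u n) < e.

Lemma onS_bound p : onS p -> Rabs (fst p) <= 2 /\ Rabs (snd p) <= 2.
Proof.
  unfold onS. intros H. destruct p as [x y]; simpl in *.
  split; apply Rabs_le; split; nra.
Qed.

Lemma dR_sym a b : dR a b = dR b a.
Proof. unfold dR. apply Rabs_minus_sym. Qed.

Lemma CPT (a : nat -> (R * R) * R) : (forall n, isC (a n)) ->
  exists f c, incr f /\ isC c /\ cv3 (fun n => a (f n)) c.
Proof.
  intros Ha.
  destruct (BW1 (fun n => fst (fst (a n))) 2) as [f1 [l1 [Hf1 Hc1]]].
  { intros n. apply (proj1 (onS_bound _ (proj1 (Ha n)))). }
  destruct (BW1 (fun n => snd (fst (a (f1 n)))) 2) as [f2 [l2 [Hf2 Hc2]]].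
  { intros n. apply (proj2 (onS_bound _ (proj1 (Ha _)))). }
  destruct (BW1 (fun n => snd (a (f1 (f2 n)))) 1) as [f3 [l3 [Hf3 Hc3]]].
  { intros n. destruct (Ha (f1 (f2 n))) as [_ H]. apply Rabs_le; lra. }
  set (f := fun n => f1 (f2 (f3 n))).
  assert (Hf : incr f) by (apply (incr_comp f1 (fun n => f2 (f3 n))); [auto| apply incr_comp; auto]).
  assert (C1 : cvs (fun n => fst (fst (a (f n)))) l1).
  { apply (cvs_sub (fun n => fst (fst (a (f1 n)))) l1 (fun n => f2 (f3 n))); auto. apply incr_comp; auto. }
  assert (C2 : cvs (fun n => snd (fst (a (f n)))) l2).
  { apply (cvs_sub (fun n => snd (fst (a (f1 (f2 n))))) l2 f3); auto. }
  exists f, ((l1, l2), l3). split; [auto|]. split.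
  - split.
    + unfold onS. change (l1 ^ 2 + l2 ^ 2 = 4). apply (cvs_const_eq (fun n => fst (fst (a (f n))) ^ 2 + snd (fst (a (f n))) ^ 2)).
      intros n; apply Ha. apply cvs_sq_sum; auto.
    + simpl. split; [apply (cvs_ge _ _ 0 (fun n => proj1 (proj2 (Ha (f1 (f2 (f3 n)))))) Hc3)
             |apply (cvs_le _ _ 1 (fun n => proj2 (proj2 (Ha (f1 (f2 (f3 n)))))) Hc3)].
  - intros e He. destruct (C1 e He) as [N1 H1]. destruct (C2 e He) as [N2 H2]. destruct (Hc3 e He) as [N3 H3].
    exists (N1 + N2 + N3)%nat. intros n Hn. unfold d3, dprod, d2, dprod. simpl.
    repeat apply Rmax_lub_lt; unfold dR; rewrite Rabs_minus_sym; [apply H1|apply H2|apply H3]; lia.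
Qed.

Lemma inv_pos n : 0 < / INR (S n).
Proof. apply Rinv_0_lt_compat, lt_0_INR; lia. Qed.

Lemma inv_small e : 0 < e -> exists N, forall n, (N <= n)%nat -> / INR (S n) < e.
Proof.
  intros He. destruct (archimed_cor1 e He) as [N [HN HN0]]. exists N. intros n Hn.
  eapply Rle_lt_trans; [|exact HN]. apply Rinv_le_contravar. apply lt_0_INR; lia. apply le_INR; lia.
Qed.

Lemma seq_witness {X : Type} (Q : R -> X -> Prop) :
  (forall d, 0 < d -> exists x, Q d x) -> exists u : nat -> X, forall n, Q (/ INR (S n)) (u n).
Proof.
  intros H. exists (fun n => proj1_sig (constructive_indefinite_description _ (H _ (inv_pos n)))).
  intros n. destruct (constructive_indefinite_description _ _). auto.
Qed.

Lemma Rmax_lt_iff a b e : Rmax a b < e <-> a < e /\ b < e.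
Proof. split. intros H; split; eapply Rle_lt_trans; eauto; [apply Rmax_l|apply Rmax_r]. intros [? ?]; apply Rmax_lub_lt; auto. Qed.

Lemma d2_sym a b : d2 a b = d2 b a.
Proof. unfold d2, dprod. rewrite (dR_sym (fst a)), (dR_sym (snd a)). auto. Qed.

Lemma dR_tri a b c : dR a c <= dR a b + dR b c.
Proof. unfold dR. replace (a - c) with ((a - b) + (b - c)) by ring. apply Rabs_triang. Qed.

Lemma d2_tri a b c : d2 a c <= d2 a b + d2 b c.
Proof.
  unfold d2, dprod. apply Rmax_lub.
  - eapply Rle_trans; [apply dR_tri|]. apply Rplus_le_compat; apply Rmax_l.
  - eapply Rle_trans; [apply dR_tri|]. apply Rplus_le_compat; apply Rmax_r.
Qed.

Lemma dR_ge0 a b : 0 <= dR a b.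
Proof. apply Rabs_pos. Qed.

Lemma d2_ge0 a b : 0 <= d2 a b.
Proof. unfold d2, dprod. eapply Rle_trans; [apply dR_ge0|apply Rmax_l]. Qed.

Lemma d2_small_eq a b : (forall e, 0 < e -> d2 a b < e) -> a = b.
Proof.
  intros H. destruct a as [a1 a2], b as [b1 b2].
  assert (forall x y, (forall e, 0 < e -> dR x y < e) -> x = y).
  { intros x y Hxy. unfold dR in Hxy. destruct (Req_dec x y) as [|Hn]; auto.
    assert (0 < Rabs (x - y)) by (apply Rabs_pos_lt; lra).
    specialize (Hxy _ H0). lra. }
  f_equal; apply H0; intros e He; specialize (H e He); unfold d2, dprod in H; simpl in H;
  apply Rmax_lt_iff in H; tauto.
Qed.

Lemma d3_sym a b : d3 a b = d3 b a.
Proof. unfold d3, dprod. rewrite d2_sym, dR_sym. auto. Qed.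

Lemma d3_tri a b c : d3 a c <= d3 a b + d3 b c.
Proof.
  unfold d3, dprod. apply Rmax_lub.
  - eapply Rle_trans; [apply d2_tri|]. apply Rplus_le_compat; apply Rmax_l.
  - eapply Rle_trans; [apply dR_tri|]. apply Rplus_le_compat; apply Rmax_r.
Qed.

Lemma d3_ge0 a b : 0 <= d3 a b.
Proof. unfold d3, dprod. eapply Rle_trans; [apply d2_ge0|apply Rmax_l]. Qed.

Lemma nbM_ball {X} (d : X -> X -> R) x e : 0 < e -> nbM d x (fun y => d x y < e).
Proof. intros He. exists e. split; auto. Qed.

Lemma cont_onM {X Y} (dX : X -> X -> R) (dY : Y -> Y -> R) A f :
  cont_on (nbM dX) (nbM dY) A f <->
  (forall x, A x -> forall e, 0 < e -> exists d, 0 < d /\ forall x', A x' -> dX x x' < d -> dY (f x) (f x') < e).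
Proof.
  split.
  - intros H x Hx e He. destruct (H x Hx _ (nbM_ball dY (f x) e He)) as [U [[d [Hd HU]] HV]].
    exists d. split; auto.
  - intros H x Hx V [e [He HV]]. destruct (H x Hx e He) as [d [Hd Hd']].
    exists (fun x' => dX x x' < d). split. apply nbM_ball; auto.
    intros x' Hx' Hu. apply HV. auto.
Qed.

Section Phi.
Variable phi : R * R -> R -> R * R.
Hypothesis Hphi : cyl_embedding phi.

Definition Phi (c : (R * R) * R) := phi (fst c) (snd c).

Lemma Phi_cont c : isC c -> forall e, 0 < e -> exists d, 0 < d /\
  forall c', isC c' -> d3 c c' < d -> d2 (Phi c) (Phi c') < e.
Proof. destruct Hphi as [H _]. rewrite cont_onM in H. intros Hc e He. apply H; auto. Qed.

Lemma Phi_D c : isC c -> inD (Phi c).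
Proof. destruct Hphi as [_ [_ [H _]]]. intros [? ?]. apply H; auto. Qed.

Lemma Phi_onto z : inD z -> exists c, isC c /\ Phi c = z.
Proof. destruct Hphi as [_ [_ [_ [H _]]]]. intros Hz. destruct (H z Hz) as [p [s [? [? ?]]]].
  exists (p, s). split; [split|]; auto. Qed.

Lemma Phi_inj c c' : isC c -> isC c' -> Phi c = Phi c' ->
  c = c' \/ (snd c = 1 /\ snd c' = 1 /\ fst (fst c) = fst (fst c')).
Proof.
  destruct Hphi as [_ [_ [_ [_ H]]]]. intros [? ?] [? ?] E.
  destruct (proj1 (H _ _ _ _ H0 H2 H1 H3) E) as [[E1 E2]|E3].
  - left. destruct c, c'; simpl in *; subst; auto.
  - right; auto.
Qed.

Lemma Phi_level c c' : isC c -> isC c' -> Phi c = Phi c' -> snd c = snd c'.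
Proof. intros H1 H2 E. destruct (Phi_inj c c' H1 H2 E) as [->|[? [? ?]]]; auto. congruence. Qed.

Lemma Phi_low c c' : isC c -> isC c' -> Phi c = Phi c' -> snd c < 1 -> c = c'.
Proof. intros H1 H2 E Hl. destruct (Phi_inj c c' H1 H2 E) as [->|[? [? ?]]]; auto. lra. Qed.

Lemma Phi_top p p' : onS p -> onS p' -> fst p = fst p' -> phi p 1 = phi p' 1.
Proof.
  destruct Hphi as [_ [_ [_ [_ H]]]]. intros Hp Hp' E. apply (H p p' 1 1); auto; try lra.
Qed.

Definition cv2 (u : nat -> R * R) z :=
  forall e, 0 < e -> exists N, forall n, (N <= n)%nat -> d2 z (u n) < e.

Lemma cv_Phi u c : isC c -> (forall n, isC (u n)) -> cv3 u c -> cv2 (fun n => Phi (u n)) (Phi c).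
Proof.
  intros Hc Hu Hcv e He. destruct (Phi_cont c Hc e He) as [d [Hd Hd']].
  destruct (Hcv d Hd) as [N HN]. exists N. intros n Hn. apply Hd'; auto.
Qed.

Lemma cv2_close_eq u v a b : cv2 u a -> cv2 v b ->
  (forall e, 0 < e -> exists N, forall n, (N <= n)%nat -> d2 (u n) (v n) < e) -> a = b.
Proof.
  intros Hu Hv Huv. apply d2_small_eq. intros e He.
  destruct (Hu (e/3)) as [N1 H1]; [lra|]. destruct (Hv (e/3)) as [N2 H2]; [lra|].
  destruct (Huv (e/3)) as [N3 H3]; [lra|].
  set (n := (N1 + N2 + N3)%nat).
  specialize (H1 n ltac:(lia)). specialize (H2 n ltac:(lia)). specialize (H3 n ltac:(lia)).
  eapply Rle_lt_trans; [apply (d2_tri _ (u n))|].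
  eapply Rle_lt_trans; [apply Rplus_le_compat_l, (d2_tri _ (v n))|].
  pose proof (d2_sym (v n) b). lra.
Qed.

Lemma cv3_sub u c f : incr f -> cv3 u c -> cv3 (fun n => u (f n)) c.
Proof.
  intros Hf H e He. destruct (H e He) as [N HN]. exists N. intros n Hn.
  apply HN. pose proof (incr_ge f Hf n). lia.
Qed.

Lemma ULV : forall e, 0 < e -> exists d, 0 < d /\ forall c c', isC c -> isC c' ->
  d2 (Phi c) (Phi c') < d -> Rabs (snd c - snd c') < e.
Proof.
  intros e He. apply NNPP. intros Hn.
  assert (Hw : forall d, 0 < d -> exists cc : ((R * R) * R) * ((R * R) * R),
     isC (fst cc) /\ isC (snd cc) /\ d2 (Phi (fst cc)) (Phi (snd cc)) < d /\ e <= Rabs (snd (fst cc) - snd (snd cc))).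
  { intros d Hd. apply NNPP. intros Hn2. apply Hn. exists d. split; auto.
    intros c c' H1 H2 H3. apply Rnot_le_lt. intros H4. apply Hn2. exists (c, c'). auto. }
  destruct (seq_witness _ Hw) as [u Hu].
  destruct (CPT (fun n => fst (u n))) as [f [a [Hf [Ha Hcv]]]]. { intros n; apply Hu. }
  destruct (CPT (fun n => snd (u (f n)))) as [g [b [Hg [Hb Hcv2]]]]. { intros n; apply Hu. }
  assert (Hab : Phi a = Phi b).
  { apply (cv2_close_eq (fun n => Phi (fst (u (f (g n))))) (fun n => Phi (snd (u (f (g n)))))).
    - apply cv_Phi; auto. intros n; apply Hu. apply (cv3_sub (fun n => fst (u (f n)))); auto.
    - apply cv_Phi; auto. intros n; apply Hu.
    - intros e' He'. destruct (inv_small e' He') as [N HN]. exists N. intros n Hnn.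
      eapply Rlt_trans; [apply Hu|]. apply HN. pose proof (incr_ge _ Hf (g n)). pose proof (incr_ge _ Hg n). lia. }
  pose proof (Phi_level a b Ha Hb Hab) as Hl.
  assert (Hc1 := cv3_sub _ _ _ Hg Hcv).
  destruct (Hc1 (e/2)) as [N1 H1]; [lra|]. destruct (Hcv2 (e/2)) as [N2 H2]; [lra|].
  specialize (H1 (N1 + N2)%nat ltac:(lia)). specialize (H2 (N1 + N2)%nat ltac:(lia)).
  simpl in H1, H2. unfold d3, dprod in H1, H2. apply Rmax_lt_iff in H1. apply Rmax_lt_iff in H2.
  destruct H1 as [_ H1], H2 as [_ H2]. unfold dR in H1, H2.
  pose proof (proj2 (proj2 (Hu (f (g (N1 + N2)%nat))))) as H3. simpl in H3.
  rewrite Hl in H1.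
  set (x := snd (fst (u (f (g (N1 + N2)%nat))))) in *.
  set (y := snd (snd (u (f (g (N1 + N2)%nat))))) in *.
  assert (Rabs (x - y) <= Rabs (snd b - x) + Rabs (snd b - y)).
  { replace (x - y) with (- (snd b - x) + (snd b - y)) by ring.
    eapply Rle_trans; [apply Rabs_triang|]. rewrite Rabs_Ropp. lra. }
  lra.
Qed.

Lemma UC2 c0 : isC c0 -> forall e, 0 < e -> exists d, 0 < d /\ forall c, isC c ->
  d2 (Phi c0) (Phi c) < d -> exists c1, isC c1 /\ Phi c1 = Phi c0 /\ d3 c1 c < e.
Proof.
  intros Hc0 e He. apply NNPP. intros Hn.
  assert (Hw : forall d, 0 < d -> exists c, isC c /\ d2 (Phi c0) (Phi c) < d /\
       forall c1, isC c1 -> Phi c1 = Phi c0 -> e <= d3 c1 c).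
  { intros d Hd. apply NNPP. intros Hn2. apply Hn. exists d. split; auto.
    intros c H1 H2. apply NNPP. intros Hn3. apply Hn2. exists c. split; auto. split; auto.
    intros c1 H4 H5. apply Rnot_lt_le. intros H6. apply Hn3. eauto. }
  destruct (seq_witness _ Hw) as [u Hu].
  destruct (CPT u) as [f [a [Hf [Ha Hcv]]]]. { intros n; apply Hu. }
  assert (Hab : Phi c0 = Phi a).
  { apply (cv2_close_eq (fun n => Phi c0) (fun n => Phi (u (f n)))).
    - intros e' He'. exists O. intros. unfold d2, dprod, dR. rewrite !Rminus_diag, Rabs_R0, Rmax_left; lra.
    - apply cv_Phi; auto. intros n; apply Hu.
    - intros e' He'. destruct (inv_small e' He') as [N HN]. exists N. intros n Hnn.
      eapply Rlt_trans; [apply Hu|]. apply HN. pose proof (incr_ge _ Hf n). lia. }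
  destruct (Hcv e He) as [N HN]. specialize (HN N (le_n _)).
  pose proof (proj2 (proj2 (Hu (f N))) a Ha (eq_sym Hab)). lra.
Qed.

End Phi.

Section Main.
Variable phi : R * R -> R -> R * R.
Variable fb : R -> R * R -> R * R.
Hypothesis Hphi : cyl_embedding phi.
Hypothesis Hunw : unwrapping phi fb.
Hypothesis Hid : forall t p s, Jint t -> onS p -> 0 <= s <= 3/4 -> fb t (phi p s) = phi p s.

Notation Phi := (Phi phi).

Definition cz (z : R * R) : (R * R) * R :=
  epsilon (inhabits ((0, 0), 0))
     (fun q : (R * R) * R => onS (fst q) /\ 0 <= snd q <= 1 /\ phi (fst q) (snd q) = z).

Lemma Ups_eq z : Ups phi z = phi (fst (cz z)) (Rmin (2 * snd (cz z)) 1).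
Proof. reflexivity. Qed.

Lemma cz_spec z : inD z -> isC (cz z) /\ Phi (cz z) = z.
Proof.
  intros Hz. destruct (Phi_onto phi Hphi z Hz) as [c [Hc Ec]].
  assert (H := epsilon_spec (inhabits ((0, 0), 0))
     (fun q : (R * R) * R => onS (fst q) /\ 0 <= snd q <= 1 /\ phi (fst q) (snd q) = z)).
  destruct H as [H1 [H2 H3]]. exists c. destruct Hc. repeat split; auto; tauto.
  split; [split|]; auto.
Qed.

Definition Fc (c : (R * R) * R) : (R * R) * R := (fst c, Rmin (2 * snd c) 1).

Lemma Fc_isC c : isC c -> isC (Fc c).
Proof. intros [H1 H2]. split; simpl; auto. unfold Rmin; destruct Rle_dec; lra. Qed.

Lemma Ups_Phi c : isC c -> Ups phi (Phi c) = Phi (Fc c).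
Proof.
  intros Hc. rewrite Ups_eq. destruct (cz_spec (Phi c)) as [H1 H2]. apply Phi_D; auto.
  destruct (Phi_inj phi Hphi _ _ H1 Hc H2) as [E|[E1 [E2 E3]]].
  - rewrite E. reflexivity.
  - rewrite E1. unfold Fc. simpl. rewrite E2. unfold Phi at 2; simpl. replace (Rmin (2 * 1) 1) with 1.
    apply Phi_top; auto. apply H1. apply Hc.
    unfold Rmin; destruct Rle_dec; lra.
Qed.

Lemma Ups_phi p s : onS p -> 0 <= s <= 1 -> Ups phi (phi p s) = phi p (Rmin (2 * s) 1).
Proof. intros Hp Hs. apply (Ups_Phi (p, s)). split; auto. Qed.

Lemma Ups_D z : inD z -> inD (Ups phi z).
Proof. intros Hz. destruct (cz_spec z Hz) as [H1 H2]. rewrite <- H2, Ups_Phi; auto. apply Phi_D; auto. apply Fc_isC; auto. Qed.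

Lemma Fc_lip a b : d3 (Fc a) (Fc b) <= 2 * d3 a b.
Proof.
  unfold d3, dprod, Fc; simpl. apply Rmax_lub.
  - pose proof (d2_ge0 (fst a) (fst b)). pose proof (Rmax_l (d2 (fst a) (fst b)) (dR (snd a) (snd b))). lra.
  - pose proof (dR_ge0 (snd a) (snd b)). pose proof (Rmax_r (d2 (fst a) (fst b)) (dR (snd a) (snd b))).
    assert (dR (Rmin (2 * snd a) 1) (Rmin (2 * snd b) 1) <= 2 * dR (snd a) (snd b)).
    { unfold dR, Rmin. destruct (Rle_dec (2 * snd a) 1), (Rle_dec (2 * snd b) 1);
      unfold Rabs; repeat destruct Rcase_abs; lra. }
    lra.
Qed.

Lemma cont_via_coords (g : R * R -> R * R) (F : (R * R) * R -> (R * R) * R) :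
  (forall c, isC c -> isC (F c) /\ g (Phi c) = Phi (F c)) ->
  (forall c u, isC c -> (forall n, isC (u n)) -> cv3 u c -> cv3 (fun n => F (u n)) (F c)) ->
  forall z0, inD z0 -> forall e, 0 < e -> exists d, 0 < d /\
    forall z, inD z -> d2 z0 z < d -> d2 (g z0) (g z) < e.
Proof.
  intros HF HFc z0 Hz0 e He. apply NNPP. intros Hn.
  assert (Hw : forall d, 0 < d -> exists z, inD z /\ d2 z0 z < d /\ e <= d2 (g z0) (g z)).
  { intros d Hd. apply NNPP. intros Hn2. apply Hn. exists d. split; auto.
    intros z H1 H2. apply Rnot_le_lt. intros H3. apply Hn2. eauto. }
  destruct (seq_witness _ Hw) as [u Hu].
  destruct (CPT (fun n => cz (u n))) as [f [a [Hf [Ha Hcv]]]]. { intros n; apply cz_spec, Hu. }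
  assert (Hza : z0 = Phi a).
  { apply (cv2_close_eq (fun n => z0) (fun n => Phi (cz (u (f n))))).
    - intros e' He'. exists O. intros. unfold d2, dprod, dR. rewrite !Rminus_diag, Rabs_R0, Rmax_left; lra.
    - apply cv_Phi; auto. intros n; apply cz_spec, Hu.
    - intros e' He'. destruct (inv_small e' He') as [N HN]. exists N. intros n Hnn.
      rewrite (proj2 (cz_spec _ (proj1 (Hu (f n))))).
      eapply Rlt_trans; [apply Hu|]. apply HN. pose proof (incr_ge _ Hf n). lia. }
  assert (Hc2 : cv2 (fun n => Phi (F (cz (u (f n))))) (Phi (F a))).
  { apply cv_Phi; auto. apply HF; auto. intros n; apply HF, cz_spec, Hu.
    apply HFc; auto. intros n; apply cz_spec, Hu. }
  destruct (Hc2 e He) as [N HN]. specialize (HN N (le_n _)).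
  rewrite <- (proj2 (HF _ (proj1 (cz_spec _ (proj1 (Hu (f N))))))) in HN.
  rewrite (proj2 (cz_spec _ (proj1 (Hu (f N))))) in HN.
  rewrite <- (proj2 (HF _ Ha)), <- Hza in HN.
  pose proof (proj2 (proj2 (Hu (f N)))). lra.
Qed.

Lemma Ups_cont z0 : inD z0 -> forall e, 0 < e -> exists d, 0 < d /\
    forall z, inD z -> d2 z0 z < d -> d2 (Ups phi z0) (Ups phi z) < e.
Proof.
  apply (cont_via_coords (Ups phi) Fc).
  - intros c Hc. split. apply Fc_isC; auto. apply Ups_Phi; auto.
  - intros c u Hc Hu Hcv e He. destruct (Hcv (e/2)) as [N HN]; [lra|]. exists N. intros n Hn.
    eapply Rle_lt_trans; [apply Fc_lip|]. specialize (HN n Hn). lra.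
Qed.

Lemma fb_D t z : Jint t -> inD z -> inD (fb t z).
Proof. intros Ht Hz. destruct Hunw as [_ H]. destruct (H t Ht) as [[H1 _] _]. auto. Qed.

Lemma fb_cont t z : Jint t -> inD z -> forall e, 0 < e -> exists d, 0 < d /\
  forall t' z', Jint t' -> inD z' -> dR t t' < d -> d2 z z' < d -> d2 (fb t z) (fb t' z') < e.
Proof.
  intros Ht Hz e He. destruct Hunw as [H _]. rewrite cont_onM in H.
  destruct (H (t, z) (conj Ht Hz) e He) as [d [Hd Hd']]. exists d. split; auto.
  intros t' z' Ht' Hz' H1 H2. apply (Hd' (t', z')); simpl; auto.
  unfold dprod; simpl. apply Rmax_lub_lt; auto.
Qed.

Notation H := (Hmap phi fb).

Lemma H_D t z : Jint t -> inD z -> inD (H t z).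
Proof. intros. unfold Hmap. apply Ups_D, fb_D; auto. Qed.

Lemma H_cont t z : Jint t -> inD z -> forall e, 0 < e -> exists d, 0 < d /\
  forall t' z', Jint t' -> inD z' -> dR t t' < d -> d2 z z' < d -> d2 (H t z) (H t' z') < e.
Proof.
  intros Ht Hz e He. destruct (Ups_cont (fb t z) (fb_D t z Ht Hz) e He) as [d1 [Hd1 H1]].
  destruct (fb_cont t z Ht Hz d1 Hd1) as [d [Hd H2]]. exists d. split; auto.
  intros. unfold Hmap. apply H1. apply fb_D; auto. apply H2; auto.
Qed.

Definition Hit j t z := Nat.iter j (H t) z.

Lemma Hit_D j t z : Jint t -> inD z -> inD (Hit j t z).
Proof. intros Ht Hz. induction j; simpl; auto. apply H_D; auto. Qed.

Lemma Hit_cont j t z : Jint t -> inD z -> forall e, 0 < e -> exists d, 0 < d /\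
  forall t' z', Jint t' -> inD z' -> dR t t' < d -> d2 z z' < d -> d2 (Hit j t z) (Hit j t' z') < e.
Proof.
  intros Ht Hz. induction j; intros e He.
  - exists e. split; auto.
  - simpl. destruct (H_cont t (Hit j t z) Ht (Hit_D j t z Ht Hz) e He) as [d1 [Hd1 H1]].
    destruct (IHj d1 Hd1) as [d2' [Hd2 H2]].
    exists (Rmin d1 d2'). split. apply Rmin_pos; auto.
    intros t' z' Ht' Hz' Hdt Hdz. apply H1; auto. apply Hit_D; auto.
    eapply Rlt_le_trans; [exact Hdt|apply Rmin_l].
    apply H2; auto; eapply Rlt_le_trans; eauto; apply Rmin_r.
Qed.

Lemma H_phi t p s : Jint t -> onS p -> 0 <= s <= 3/4 -> H t (phi p s) = phi p (Rmin (2 * s) 1).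
Proof. intros Ht Hp Hs. unfold Hmap. rewrite Hid; auto. apply Ups_phi; auto. lra. Qed.

End Main.

Lemma cont_of_ed F : (forall x e, 0 < e -> exists d, 0 < d /\ forall y, Rabs (y - x) < d -> Rabs (F y - F x) < e) -> continuity F.
Proof.
  intros H x e He. destruct (H x e He) as [d [Hd Hd']]. exists d. split; [lra|].
  intros y [_ Hy]. simpl in *. unfold R_dist in *. apply Hd'; auto.
Qed.

Lemma ed_of_cont F : continuity F -> forall x e, 0 < e -> exists d, 0 < d /\ forall y, Rabs (y - x) < d -> Rabs (F y - F x) < e.
Proof.
  intros H x e He. destruct (H x e He) as [d [Hd Hd']]. exists d. split; [lra|].
  intros y Hy. destruct (Req_dec y x) as [->|Hne]. rewrite Rminus_diag, Rabs_R0; auto.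
  apply (Hd' y). split. split; [exact I|auto]. simpl. unfold R_dist; auto.
Qed.

Lemma angle q : onS q -> exists a, q = (2 * cos a, 2 * sin a).
Proof.
  intros Hq. destruct q as [x y]. unfold onS in Hq; simpl in Hq.
  assert (Hb : -1 <= x / 2 <= 1) by (split; nra).
  assert (Hy2 : (y / 2) ^ 2 = 1 - (x/2)²) by (unfold Rsqr; field_simplify; lra).
  destruct (Rle_dec 0 y).
  - exists (acos (x / 2)). rewrite cos_acos, sin_acos; auto. f_equal; [field|].
    rewrite <- Hy2. rewrite sqrt_pow2; [field|lra].
  - exists (- acos (x / 2)). rewrite cos_neg, sin_neg, cos_acos, sin_acos; auto. f_equal; [field|].
    rewrite <- Hy2. replace ((y / 2) ^ 2) with ((- (y / 2)) ^ 2) by ring.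
    rewrite sqrt_pow2; [field|lra].
Qed.

Lemma theta_hit (theta : R -> R) : continuity theta ->
  (forall a, theta (a + 2 * PI) = theta a + 2 * PI) -> forall a0, exists al, theta al = a0.
Proof.
  intros Hc Hp a0. set (m := theta 0).
  assert (Hpos : forall n, theta (2 * PI * INR n) = m + 2 * PI * INR n).
  { induction n. simpl. rewrite Rmult_0_r, Rplus_0_r; auto.
    rewrite S_INR. replace (2 * PI * (INR n + 1)) with (2 * PI * INR n + 2 * PI) by ring.
    rewrite Hp, IHn. ring. }
  assert (Hneg : forall n, theta (- (2 * PI * INR n)) = m - 2 * PI * INR n).
  { induction n. simpl. rewrite Rmult_0_r, Ropp_0; unfold m; ring_simplify; auto.
    rewrite S_INR. pose proof (Hp (- (2 * PI * (INR n + 1)))) as E.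
    replace (- (2 * PI * (INR n + 1)) + 2 * PI) with (- (2 * PI * INR n)) in E by ring.
    rewrite IHn in E. lra. }
  pose proof PI_RGT_0.
  destruct (archimed ((Rabs (m - a0) + 1) / (2 * PI))) as [Hu _].
  set (n := Z.to_nat (up ((Rabs (m - a0) + 1) / (2 * PI)))).
  assert (Hn : (Rabs (m - a0) + 1) / (2 * PI) < INR n).
  { unfold n. rewrite INR_IZR_INZ, Z2Nat.id. auto. apply le_IZR. 
    pose proof (Rabs_pos (m - a0)). assert (0 < (Rabs (m - a0) + 1) / (2 * PI)) by (apply Rdiv_lt_0_compat; lra). lra. }
  assert (Hn2 : Rabs (m - a0) + 1 < 2 * PI * INR n).
  { apply (Rmult_lt_compat_l (2 * PI)) in Hn; [|lra]. field_simplify in Hn; lra. }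
  pose proof (Rabs_pos (m - a0)).
  assert (Hab : m - a0 <= Rabs (m - a0) /\ a0 - m <= Rabs (m - a0)).
  { split; [apply Rle_abs|rewrite Rabs_minus_sym; apply Rle_abs]. }
  destruct (IVT (fun a => theta a - a0) (- (2 * PI * INR n)) (2 * PI * INR n)) as [al [_ Hal]].
  - apply continuity_minus; auto. apply continuity_const. intros ? ?; auto.
  - lra.
  - simpl. rewrite Hneg. lra.
  - simpl. rewrite Hpos. lra.
  - exists al. lra.
Qed.

Section Main2.
Variable phi : R * R -> R -> R * R.
Variable fb : R -> R * R -> R * R.
Hypothesis Hphi : cyl_embedding phi.
Hypothesis Hunw : unwrapping phi fb.
Hypothesis Hid : forall t p s, Jint t -> onS p -> 0 <= s <= 3/4 -> fb t (phi p s) = phi p s.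

Notation Phi := (Phi phi).
Notation cz := (cz phi).
Notation H := (Hmap phi fb).

Definition lv z := snd (cz z).

Lemma lv_Phi c : isC c -> lv (Phi c) = snd c.
Proof.
  intros Hc. unfold lv. destruct (cz_spec phi Hphi (Phi c)) as [H1 H2]. apply Phi_D; auto.
  apply (Phi_level phi Hphi); auto.
Qed.

Lemma lv_phi p s : onS p -> 0 <= s <= 1 -> lv (phi p s) = s.
Proof. intros. apply (lv_Phi (p, s)). split; auto. Qed.

Lemma ULV_D e : 0 < e -> exists d, 0 < d /\ forall z z', inD z -> inD z' -> d2 z z' < d -> Rabs (lv z - lv z') < e.
Proof.
  intros He. destruct (ULV phi Hphi e He) as [d [Hd Hd']]. exists d. split; auto.
  intros z z' Hz Hz' Hzz. destruct (cz_spec phi Hphi z Hz) as [A1 A2]. destruct (cz_spec phi Hphi z' Hz') as [B1 B2].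
  apply Hd'; auto. rewrite A2, B2; auto.
Qed.

Lemma lv_range z : inD z -> 0 <= lv z <= 1.
Proof. intros Hz. apply (cz_spec phi Hphi z Hz). Qed.

Lemma phi_0 p : onS p -> phi p 0 = p.
Proof. destruct Hphi as [_ [H _]]. auto. Qed.

Lemma phi_D p s : onS p -> 0 <= s <= 1 -> inD (phi p s).
Proof. destruct Hphi as [_ [_ [H _]]]. auto. Qed.

Lemma phi_s_cont p s : onS p -> 0 <= s <= 1 -> forall e, 0 < e -> exists d, 0 < d /\
  forall s', 0 <= s' <= 1 -> Rabs (s - s') < d -> d2 (phi p s) (phi p s') < e.
Proof.
  intros Hp Hs e He. destruct (Phi_cont phi Hphi (p, s) (conj Hp Hs) e He) as [d [Hd Hd']].
  exists d. split; auto. intros s' Hs' Hss. apply (Hd' (p, s')). split; auto.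
  unfold d3, dprod; simpl. apply Rmax_lub_lt; auto. unfold d2, dprod, dR. rewrite !Rminus_diag, Rabs_R0, Rmax_left; lra.
Qed.

Definition clamp (x : R) := Rmax 0 (Rmin x 1).

Lemma clamp_range x : 0 <= clamp x <= 1.
Proof. unfold clamp, Rmax, Rmin. repeat destruct Rle_dec; lra. Qed.

Lemma clamp_lip x y : Rabs (clamp x - clamp y) <= Rabs (x - y).
Proof. unfold clamp, Rmax, Rmin. repeat destruct Rle_dec; unfold Rabs; repeat destruct Rcase_abs; lra. Qed.

Lemma fb_fix_D t z : Jint t -> inD z -> lv z <= 3/4 -> fb t z = z.
Proof.
  intros Ht Hz Hl. destruct (cz_spec phi Hphi z Hz) as [[A1 A2] A3].
  rewrite <- A3. unfold Phi. apply Hid; auto. unfold lv in Hl. lra.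
Qed.

Lemma K t w p r : Jint t -> inD w -> onS p -> 0 <= r < 1/2 -> fb t w = phi p r -> w = phi p r.
Proof.
  intros Ht Hw Hp Hr Efb.
  destruct (Rle_dec (lv w) (3/4)) as [Hle|Hgt].
  { rewrite <- Efb. symmetry. apply fb_fix_D; auto. }
  exfalso.
  destruct (ULV_D (1/16)) as [d1 [Hd1 HU]]; [lra|].
  destruct Hunw as [_ HW]. destruct (HW t Ht) as [[_ Hnear] _].
  destruct (Hnear d1 Hd1) as [h [[[hD [hc [g [Hg1 [Hg2 gc]]]]] [theta [Hth1 [Hth2 Hth3]]]] Hclose]].
  rewrite cont_onM in gc.
  assert (Hhw : inD (h w)) by auto.
  assert (Hr' : lv (h w) < 9/16).
  { specialize (Hclose w Hw). rewrite Efb in Hclose.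
    specialize (HU _ _ (phi_D p r Hp ltac:(lra)) Hhw Hclose). rewrite lv_phi in HU; auto; [|lra].
    unfold Rabs in HU; destruct Rcase_abs in HU; lra. }
  destruct (cz_spec phi Hphi (h w) Hhw) as [[Hq' Hr0] Ehw].
  set (q' := fst (cz (h w))) in *. set (r' := snd (cz (h w))) in *.
  assert (Er' : lv (h w) = r') by reflexivity.
  set (gam := fun x => phi q' (clamp x * r')).
  assert (Hgr : forall x, 0 <= clamp x * r' <= 1).
  { intros x. pose proof (clamp_range x). split; nra. }
  assert (HgD : forall x, inD (gam x)) by (intros; apply phi_D; auto).
  set (F := fun x => lv (g (gam x)) - 5/8).
  assert (HFc : continuity F).
  { apply cont_of_ed. intros x e He.
    destruct (ULV_D e He) as [d2' [Hd2 HU2]].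
    destruct (gc (gam x) (HgD x) d2' Hd2) as [d3' [Hd3 Hgc]].
    destruct (phi_s_cont q' (clamp x * r') Hq' (Hgr x) d3' Hd3) as [d4 [Hd4 Hpc]].
    exists (d4 / (r' + 1)). split. apply Rdiv_lt_0_compat; lra.
    intros y Hy. unfold F. replace (lv (g (gam y)) - 5 / 8 - (lv (g (gam x)) - 5 / 8)) with
      (- (lv (g (gam x)) - lv (g (gam y)))) by ring. rewrite Rabs_Ropp.
    apply HU2. apply Hg1, HgD. apply Hg1, HgD. apply Hgc. apply HgD. apply Hpc. apply Hgr.
    replace (clamp x * r' - clamp y * r') with ((clamp x - clamp y) * r') by ring.
    rewrite Rabs_mult, (Rabs_right r'); [|lra].
    pose proof (clamp_lip x y). rewrite Rabs_minus_sym in Hy.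
    assert (Rabs (x - y) * (r' + 1) < d4).
    { apply (Rmult_lt_compat_r (r' + 1)) in Hy; [|lra]. field_simplify in Hy; lra. }
    pose proof (Rabs_pos (clamp x - clamp y)). nra. }
  destruct (angle q' Hq') as [a0 Ea0].
  destruct (theta_hit theta Hth1 Hth2 a0) as [al Hal].
  set (x0 := (2 * cos al, 2 * sin al)).
  assert (Hx0 : onS x0).
  { unfold onS, x0; simpl. pose proof (sin2_cos2 al) as Hsc. unfold Rsqr in Hsc. nra. }
  assert (Hhx0 : h x0 = q').
  { unfold x0. rewrite Hth3, Hal. auto. }
  assert (HF0 : F 0 < 0).
  { unfold F, gam. replace (clamp 0 * r') with 0 by (unfold clamp, Rmax, Rmin; repeat destruct Rle_dec; lra).
    rewrite phi_0 by auto. rewrite <- Hhx0.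
    rewrite Hg2 by (unfold inD; unfold onS in Hx0; lra).
    assert (lv x0 = 0) by (rewrite <- (lv_phi x0 0), phi_0; auto; lra). lra. }
  assert (HF1 : 0 < F 1).
  { unfold F, gam. replace (clamp 1 * r') with r' by (unfold clamp, Rmax, Rmin; repeat destruct Rle_dec; lra).
    change (phi q' r') with (Phi (cz (h w))). rewrite Ehw, Hg2; auto. lra. }
  destruct (IVT F 0 1 HFc ltac:(lra) HF0 HF1) as [tau [Htau HFt]].
  set (v := g (gam tau)).
  assert (HvD : inD v) by (apply Hg1, HgD).
  assert (Hlv : lv v = 5/8) by (unfold F in HFt; fold v in HFt; lra).
  assert (Hhv : h v = gam tau) by (apply Hg1, HgD).
  pose proof (Hclose v HvD) as Hc. rewrite fb_fix_D in Hc; auto; [|lra].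
  rewrite Hhv in Hc. specialize (HU _ _ HvD (HgD tau) Hc).
  unfold gam in HU. rewrite lv_phi in HU; auto. rewrite Hlv in HU.
  assert (clamp tau * r' <= r').
  { pose proof (clamp_range tau). nra. }
  unfold Rabs in HU; destruct Rcase_abs in HU; lra.
Qed.

End Main2.

Definition kf (s : R) : nat := Z.to_nat (Int_part s).

Lemma kf_spec s : 0 <= s -> INR (kf s) <= s < INR (kf s) + 1.
Proof.
  intros Hs. destruct (base_Int_part s) as [H1 H2].
  assert (Hz : (0 <= Int_part s)%Z).
  { unfold Int_part. destruct (archimed s). assert (0 < up s)%Z by (apply lt_IZR; lra). lia. }
  unfold kf. rewrite INR_IZR_INZ, Z2Nat.id; auto. lra.
Qed.

Lemma kf_unique s k : INR k <= s < INR k + 1 -> kf s = k.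
Proof.
  intros [H1 H2]. unfold kf, Int_part.
  assert (up s = (Z.of_nat k + 1)%Z).
  { symmetry. apply tech_up; rewrite plus_IZR, <- INR_IZR_INZ; simpl; lra. }
  rewrite H. replace (Z.of_nat k + 1 - 1)%Z with (Z.of_nat k) by ring. apply Nat2Z.id.
Qed.

Lemma pow2_pos n : 0 < 2 ^ n.
Proof. apply pow_lt; lra. Qed.

Lemma pow2_ge n : INR n + 1 <= 2 ^ n.
Proof. induction n. simpl; lra. rewrite S_INR. simpl. pose proof (pow2_pos n). pose proof (pos_INR n). lra. Qed.

Lemma pow2_S n : 2 ^ S n = 2 * 2 ^ n.
Proof. reflexivity. Qed.

Lemma pow2_le m n : (m <= n)%nat -> 2 ^ m <= 2 ^ n.
Proof. intros. apply Rle_pow; lra || lia. Qed.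

Lemma pow2_lt m n : (m < n)%nat -> 2 ^ m < 2 ^ n.
Proof. intros. apply Rlt_pow; lra || lia. Qed.

Lemma pow2_sub m n : (m <= n)%nat -> 2 ^ n = 2 ^ (n - m) * 2 ^ m.
Proof. intros. rewrite <- pow_add. f_equal. lia. Qed.

Definition lam (s : R) : R :=
  if Rlt_dec s 1 then s else (s - INR (kf s) + 1) * 2 ^ (kf s - 1).

Lemma kf_ge1 s : 1 <= s -> (1 <= kf s)%nat.
Proof.
  intros Hs. pose proof (kf_spec s ltac:(lra)). destruct (kf s); simpl in *; lia || lra.
Qed.

Lemma lam_lo s : 0 <= s < 1 -> lam s = s.
Proof. intros. unfold lam. destruct Rlt_dec; lra. Qed.

Lemma lam_hi s : 1 <= s -> 2 ^ (kf s - 1) <= lam s < 2 ^ kf s.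
Proof.
  intros Hs. unfold lam. destruct Rlt_dec; [lra|]. pose proof (kf_spec s ltac:(lra)).
  pose proof (kf_ge1 s Hs). pose proof (pow2_pos (kf s - 1)).
  rewrite (pow2_sub (kf s - 1) (kf s)) by lia. replace (kf s - (kf s - 1))%nat with 1%nat by lia.
  simpl. split; nra.
Qed.

Lemma lam_ge0 s : 0 <= s -> 0 <= lam s.
Proof.
  intros Hs. destruct (Rlt_dec s 1). rewrite lam_lo; lra.
  pose proof (lam_hi s ltac:(lra)). pose proof (pow2_pos (kf s - 1)). lra.
Qed.

Lemma lam_mono s s' : 0 <= s -> s < s' -> lam s < lam s'.
Proof.
  intros Hs Hss.
  destruct (Rlt_dec s' 1).
  { rewrite !lam_lo; lra. }
  destruct (Rlt_dec s 1).
  { rewrite lam_lo by lra. pose proof (lam_hi s' ltac:(lra)). pose proof (pow2_pos 0).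
    pose proof (pow2_le 0 (kf s' - 1) ltac:(lia)). simpl in *. lra. }
  pose proof (kf_spec s ltac:(lra)). pose proof (kf_spec s' ltac:(lra)).
  assert (Hk : (kf s <= kf s')%nat).
  { destruct (le_lt_dec (kf s) (kf s')); auto. apply lt_INR in l. assert (INR (kf s') + 1 <= INR (kf s)).
    { rewrite <- S_INR. apply le_INR. apply INR_lt in l. lia. } lra. }
  destruct (Nat.eq_dec (kf s) (kf s')) as [E|Ne].
  - unfold lam. destruct Rlt_dec; [lra|]. destruct Rlt_dec; [lra|]. rewrite E.
    pose proof (pow2_pos (kf s' - 1)). apply Rmult_lt_compat_r; auto. rewrite E in *. lra.
  - pose proof (lam_hi s ltac:(lra)). pose proof (lam_hi s' ltac:(lra)).
    pose proof (pow2_le (kf s) (kf s' - 1) ltac:(lia)). lra.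
Qed.

Lemma lam_mono_le s s' : 0 <= s -> s <= s' -> lam s <= lam s'.
Proof. intros H1 H2. destruct (Req_dec s s'). subst; lra. left; apply lam_mono; lra. Qed.

Lemma lam_inj s s' : 0 <= s -> 0 <= s' -> lam s = lam s' -> s = s'.
Proof.
  intros H1 H2 E. destruct (Rtotal_order s s') as [Hl|[Hl|Hl]]; auto.
  pose proof (lam_mono s s' H1 Hl); lra. pose proof (lam_mono s' s H2 Hl); lra.
Qed.

Lemma lam_onto x : 0 <= x -> exists s, 0 <= s /\ lam s = x.
Proof.
  intros Hx. destruct (Rlt_dec x 1). { exists x. split; auto. apply lam_lo; lra. }
  assert (Hex : exists n, x < 2 ^ n).
  { destruct (archimed x) as [Hu _]. exists (Z.to_nat (up x)).
    pose proof (pow2_ge (Z.to_nat (up x))). rewrite INR_IZR_INZ, Z2Nat.id in H.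
    lra. apply le_IZR. lra. }
  destruct (dec_inh_nat_subset_has_unique_least_element (fun n => x < 2 ^ n)) as [k [[Hk Hmin] _]].
  { intros m. apply classic. } { auto. }
  assert (Hk1 : (1 <= k)%nat). { destruct k; simpl in Hk; lia || lra. }
  assert (Hk2 : 2 ^ (k - 1) <= x).
  { apply Rnot_lt_le. intros Hc. specialize (Hmin _ Hc). lia. }
  pose proof (pow2_pos (k - 1)).
  set (s := INR k - 1 + x / 2 ^ (k - 1)).
  assert (Hq : 1 <= x / 2 ^ (k - 1) < 2).
  { assert (Ex : x / 2 ^ (k - 1) * 2 ^ (k - 1) = x) by (field; lra).
    split. apply (Rmult_le_reg_r (2 ^ (k - 1))); auto. rewrite Ex; lra.
    apply (Rmult_lt_reg_r (2 ^ (k - 1))); auto. rewrite Ex.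
    rewrite (pow2_sub (k - 1) k) in Hk by lia. replace (k - (k - 1))%nat with 1%nat in Hk by lia. simpl in Hk. lra. }
  assert (Hkf : kf s = k). { apply kf_unique. unfold s. lra. }
  exists s. split. { unfold s. pose proof (pos_INR k). apply le_INR in Hk1. simpl in Hk1. lra. }
  unfold lam. destruct Rlt_dec. { unfold s in r. apply le_INR in Hk1. simpl in Hk1. lra. }
  rewrite Hkf. unfold s. field_simplify; lra.
Qed.

Definition mu (x : R) : R := epsilon (inhabits 0) (fun s => 0 <= s /\ lam s = x).

Lemma mu_spec x : 0 <= x -> 0 <= mu x /\ lam (mu x) = x.
Proof. intros Hx. unfold mu. apply epsilon_spec. apply lam_onto; auto. Qed.

Lemma mu_lam s : 0 <= s -> mu (lam s) = s.
Proof. intros Hs. destruct (mu_spec (lam s) (lam_ge0 s Hs)). apply lam_inj; auto. Qed.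

Lemma mu_cont x0 : 0 <= x0 -> forall e, 0 < e -> exists d, 0 < d /\
  forall x, 0 <= x -> Rabs (x - x0) < d -> Rabs (mu x - mu x0) < e.
Proof.
  intros Hx0 e He. destruct (mu_spec x0 Hx0) as [Hs0 Hl0]. set (s0 := mu x0) in *.
  assert (Hup : x0 < lam (s0 + e)) by (rewrite <- Hl0; apply lam_mono; lra).
  destruct (Rlt_dec (s0 - e) 0) as [Hneg|Hnn].
  - exists (lam (s0 + e) - x0). split; [lra|]. intros x Hx Hd. destruct (mu_spec x Hx) as [A1 A2].
    apply Rabs_def1.
    + apply Rnot_le_lt. intros Hc. assert (lam (s0 + e) <= lam (mu x)) by (apply lam_mono_le; lra).
      unfold Rabs in Hd; destruct Rcase_abs in Hd; lra.
    + lra.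
  - assert (Hlo : lam (s0 - e) < x0) by (rewrite <- Hl0; apply lam_mono; lra).
    exists (Rmin (lam (s0 + e) - x0) (x0 - lam (s0 - e))). split. apply Rmin_pos; lra.
    intros x Hx Hd. destruct (mu_spec x Hx) as [A1 A2].
    pose proof (Rmin_l (lam (s0 + e) - x0) (x0 - lam (s0 - e))).
    pose proof (Rmin_r (lam (s0 + e) - x0) (x0 - lam (s0 - e))).
    apply Rabs_def1.
    + apply Rnot_le_lt. intros Hc. assert (lam (s0 + e) <= lam (mu x)) by (apply lam_mono_le; lra).
      unfold Rabs in Hd; destruct Rcase_abs in Hd; lra.
    + apply Rnot_le_lt. intros Hc. assert (lam (mu x) <= lam (s0 - e)) by (apply lam_mono_le; lra).
      unfold Rabs in Hd; destruct Rcase_abs in Hd; lra.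
Qed.

Lemma Rdiv_le_0_compat' a b : 0 <= a -> 0 < b -> 0 <= a / b.
Proof. intros. unfold Rdiv. apply Rmult_le_pos; auto. left; apply Rinv_0_lt_compat; auto. Qed.

Section Main3.
Variable phi : R * R -> R -> R * R.
Variable fb : R -> R * R -> R * R.
Hypothesis Hphi : cyl_embedding phi.
Hypothesis Hunw : unwrapping phi fb.
Hypothesis Hid : forall t p s, Jint t -> onS p -> 0 <= s <= 3/4 -> fb t (phi p s) = phi p s.

Notation Phi := (Phi phi).
Notation cz := (cz phi).
Notation H := (Hmap phi fb).
Notation lv := (lv phi).

Lemma cz_low p r : onS p -> 0 <= r < 1 -> cz (phi p r) = (p, r).
Proof.
  intros Hp Hr. destruct (cz_spec phi Hphi (phi p r)) as [H1 H2]. apply phi_D; auto; lra.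
  symmetry. apply (Phi_low phi Hphi (p, r)); auto. split; simpl; auto; lra. simpl; lra.
Qed.

Lemma H_inv t z p r : Jint t -> inD z -> onS p -> 0 <= r < 1 -> H t z = phi p r -> z = phi p (r / 2).
Proof.
  intros Ht Hz Hp Hr E. unfold Hmap in E.
  pose proof (fb_D phi fb Hunw t z Ht Hz) as Hy.
  destruct (cz_spec phi Hphi _ Hy) as [Hc Ec].
  rewrite <- Ec, Ups_Phi in E; auto.
  assert (E2 : (p, r) = Fc (cz (fb t z))).
  { apply (Phi_low phi Hphi); auto. split; simpl; auto; lra. apply Fc_isC; auto. simpl; lra. }
  unfold Fc in E2. injection E2 as E3 E4.
  assert (E5 : 2 * snd (cz (fb t z)) = r).
  { unfold Rmin in E4. destruct Rle_dec; lra. }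
  apply (K phi fb Hphi Hunw Hid t); auto. lra.
  rewrite <- Ec. unfold Phi. rewrite <- E3. f_equal. lra.
Qed.

Lemma tail t z M q r : Jint t -> Dhat phi fb t z -> onS q -> 0 <= r < 1 -> z M = phi q r ->
  forall j, z (M + j)%nat = phi q (r / 2 ^ j).
Proof.
  intros Ht Hz Hq Hr EM. induction j.
  - rewrite Nat.add_0_r. simpl. rewrite EM. f_equal. field.
  - destruct (Hz (M + j)%nat) as [_ E]. replace (S (M + j)) with (M + S j)%nat in E by lia.
    pose proof (pow2_pos j).
    assert (Hr2 : 0 <= r / 2 ^ j < 1).
    { split. apply Rdiv_le_0_compat'; lra. apply (Rmult_lt_reg_r (2 ^ j)); auto.
      unfold Rdiv. rewrite Rmult_assoc, Rinv_l, Rmult_1_r by lra. pose proof (pow2_ge j). pose proof (pos_INR j). nra. }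
    rewrite IHj in E. apply H_inv in E; auto. rewrite E. f_equal. simpl. field. lra.
    apply (Hz (M + S j)%nat).
Qed.

Lemma Dhat_back t a b M : Dhat phi fb t a -> Dhat phi fb t b -> a M = b M -> forall n, (n <= M)%nat -> a n = b n.
Proof.
  intros Ha Hb E n Hn. remember (M - n)%nat as j. revert n Hn Heqj. induction j; intros n Hn Hj.
  - replace n with M by lia. auto.
  - destruct (Ha n) as [_ E1]. destruct (Hb n) as [_ E2]. rewrite <- E1, <- E2. f_equal. apply IHj; lia.
Qed.

Lemma threads_agree t a b M : Jint t -> Dhat phi fb t a -> Dhat phi fb t b -> a M = b M -> lv (a M) < 1 -> a = b.
Proof.
  intros Ht Ha Hb E Hl. apply functional_extensionality. intros n.
  destruct (le_lt_dec n M). apply (Dhat_back t a b M); auto.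
  destruct (cz_spec phi Hphi (a M)) as [[Hc1 Hc2] Hc3]. apply Ha.
  assert (E1 := tail t a M _ _ Ht Ha Hc1 (conj (proj1 Hc2) Hl) (eq_sym Hc3) (n - M)).
  assert (E2 := tail t b M _ _ Ht Hb Hc1 (conj (proj1 Hc2) Hl) (eq_trans (eq_sym E) (eq_sym Hc3)) (n - M)).
  replace (M + (n - M))%nat with n in E1, E2 by lia. congruence.
Qed.

Lemma lam_lt s : 0 <= s -> lam s < 2 ^ kf s.
Proof.
  intros Hs. destruct (Rlt_dec s 1). rewrite lam_lo by lra.
  rewrite (kf_unique s 0); simpl; lra. apply lam_hi; lra.
Qed.

Lemma Psit_lo t p s n : 0 <= s < 1 -> Psit phi fb t (p, s) n = phi p (s / 2 ^ n).
Proof. intros Hs. unfold Psit; simpl. destruct Rlt_dec; [reflexivity|lra]. Qed.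

Lemma Psit_hi t p s n : 1 <= s -> Psit phi fb t (p, s) n =
  if (n <=? kf s)%nat then Hit phi fb (kf s - n) t (phi p ((s - INR (kf s) + 1) / 2))
  else phi p ((s - INR (kf s) + 1) / 2 / 2 ^ (n - kf s)).
Proof. intros Hs. unfold Psit; simpl. destruct Rlt_dec; [lra|reflexivity]. Qed.

Lemma P1 t p s n : 0 <= s -> (kf s <= n)%nat -> Psit phi fb t (p, s) n = phi p (lam s / 2 ^ n).
Proof.
  intros Hs Hn. destruct (Rlt_dec s 1).
  { rewrite Psit_lo by lra. rewrite lam_lo by lra. auto. }
  pose proof (kf_ge1 s ltac:(lra)) as Hk.
  rewrite Psit_hi by lra. unfold lam. destruct Rlt_dec; [lra|].
  pose proof (pow2_pos (kf s - 1)). pose proof (pow2_pos (n - kf s)).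
  assert (E : 2 ^ n = 2 ^ (n - kf s) * (2 * 2 ^ (kf s - 1))).
  { rewrite <- pow2_S. replace (S (kf s - 1)) with (kf s) by lia. apply pow2_sub; auto. }
  destruct (Nat.leb_spec n (kf s)).
  - replace n with (kf s) in * by lia. rewrite Nat.sub_diag. simpl. f_equal.
    rewrite E. rewrite Nat.sub_diag. simpl. field. lra.
  - f_equal. rewrite E. field. lra.
Qed.

Lemma P1_level s n : 0 <= s -> (kf s <= n)%nat -> 0 <= lam s / 2 ^ n < 1.
Proof.
  intros Hs Hn. pose proof (lam_lt s Hs). pose proof (lam_ge0 s Hs). pose proof (pow2_pos n).
  pose proof (pow2_le _ _ Hn). split. apply Rdiv_le_0_compat'; lra.
  apply (Rmult_lt_reg_r (2 ^ n)); auto. unfold Rdiv. rewrite Rmult_assoc, Rinv_l, Rmult_1_r by lra. lra.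
Qed.

Lemma P1_level2 s n : 0 <= s -> (S (kf s) <= n)%nat -> lam s / 2 ^ n < 1/2.
Proof.
  intros Hs Hn. pose proof (lam_lt s Hs). pose proof (pow2_pos n).
  pose proof (pow2_le _ _ Hn) as Hp2. rewrite pow2_S in Hp2.
  apply (Rmult_lt_reg_r (2 ^ n)); auto. unfold Rdiv. rewrite Rmult_assoc, Rinv_l, Rmult_1_r by lra. lra.
Qed.

Lemma Dhat_Psit t p s : Jint t -> onS p -> 0 <= s -> Dhat phi fb t (Psit phi fb t (p, s)).
Proof.
  intros Ht Hp Hs n. split.
  - destruct (le_lt_dec (kf s) n).
    + rewrite P1; auto. apply phi_D; auto. pose proof (P1_level s n Hs l); lra.
    + rewrite Psit_hi. rewrite (proj2 (Nat.leb_le _ _)) by lia. apply Hit_D; auto.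
      apply phi_D; auto. pose proof (kf_spec s Hs). split; lra.
      apply Rnot_lt_le. intros Hc. rewrite (kf_unique s 0) in l; simpl; lia || lra.
  - destruct (le_lt_dec (kf s) n).
    + rewrite !P1 by (auto; lia). rewrite H_phi; auto.
      * f_equal. pose proof (pow2_pos n).
        replace (2 * (lam s / 2 ^ S n)) with (lam s / 2 ^ n) by (simpl; field; lra).
        pose proof (P1_level s n Hs l). rewrite Rmin_left; lra.
      * pose proof (P1_level2 s (S n) Hs ltac:(lia)). pose proof (P1_level s (S n) Hs ltac:(lia)). lra.
    + assert (Hs1 : 1 <= s). { apply Rnot_lt_le. intros Hc. rewrite (kf_unique s 0) in l; simpl; lia || lra. }
      rewrite !Psit_hi by auto.
      rewrite (proj2 (Nat.leb_le n (kf s))) by lia.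
      destruct (Nat.leb_spec (S n) (kf s)).
      * replace (kf s - n)%nat with (S (kf s - S n)) by lia. reflexivity.
      * lia.
Qed.

Lemma jI_onS x : Iint x -> onS (2 * x, 2 * sqrt (1 - x ^ 2)).
Proof.
  intros [H1 H2]. unfold onS. cbn [fst snd].
  assert (Er : sqrt (1 - x ^ 2) * sqrt (1 - x ^ 2) = 1 - x ^ 2) by (apply sqrt_sqrt; nra).
  replace ((2 * x) ^ 2 + (2 * sqrt (1 - x ^ 2)) ^ 2)
    with (4 * x ^ 2 + 4 * (sqrt (1 - x ^ 2) * sqrt (1 - x ^ 2))) by ring.
  rewrite Er. ring.
Qed.

Lemma lv_jI x : Iint x -> lv (jI phi x) = 1.
Proof. intros Hx. unfold jI. apply lv_phi; auto. apply jI_onS; auto. lra. Qed.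

Lemma not_Ihat_Psit t p s : Jint t -> onS p -> 0 <= s -> ~ Ihat phi t (Psit phi fb t (p, s)).
Proof.
  intros Ht Hp Hs [x [Hx Ez]]. specialize (Ez (S (kf s))).
  rewrite P1 in Ez by (auto; lia).
  pose proof (P1_level s (S (kf s)) Hs ltac:(lia)).
  assert (Hl1 : lv (phi p (lam s / 2 ^ S (kf s))) = 1) by (rewrite Ez; apply lv_jI, Hx).
  rewrite lv_phi in Hl1; auto; lra.
Qed.

End Main3.

Definition val phi (z : nat -> R * R) n := (fst (cz phi (z n)), 2 ^ n * lv phi (z n)).
Definition Gt phi (z : nat -> R * R) : (R * R) * R :=
  let M := epsilon (inhabits O) (fun n => lv phi (z n) < 1/2) in
  (fst (val phi z M), mu (snd (val phi z M))).

Lemma ft_I t x : Jint t -> Iint x -> Iint (ft t x).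
Proof.
  intros [Ht1 Ht2] [Hx1 Hx2]. unfold ft, Iint, Rmin. destruct Rle_dec; split; nra.
Qed.

Section Main4.
Variable phi : R * R -> R -> R * R.
Variable fb : R -> R * R -> R * R.
Hypothesis Hphi : cyl_embedding phi.
Hypothesis Hunw : unwrapping phi fb.
Hypothesis Hid : forall t p s, Jint t -> onS p -> 0 <= s <= 3/4 -> fb t (phi p s) = phi p s.

Notation Phi := (Phi phi).
Notation cz := (cz phi).
Notation H := (Hmap phi fb).
Notation lv := (lv phi).

Lemma z_Phi z : inD z -> z = phi (fst (cz z)) (lv z).
Proof. intros Hz. symmetry. apply (cz_spec phi Hphi z Hz). Qed.

Lemma val_tail t z M : Jint t -> Dhat phi fb t z -> lv (z M) < 1 ->
  forall j, val phi z (M + j) = val phi z M.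
Proof.
  intros Ht Hz Hl j. destruct (cz_spec phi Hphi (z M) (proj1 (Hz M))) as [[Hq Hr] Ec].
  pose proof (tail phi fb Hphi Hunw Hid t z M _ _ Ht Hz Hq (conj (proj1 Hr) Hl) (eq_sym Ec) j) as Ej.
  unfold val. rewrite Ej. pose proof (pow2_pos j).
  assert (Hr2 : 0 <= lv (z M) / 2 ^ j < 1).
  { split. apply Rdiv_le_0_compat'; auto; apply Hr. apply (Rmult_lt_reg_r (2 ^ j)); auto.
    unfold Rdiv. rewrite Rmult_assoc, Rinv_l, Rmult_1_r by lra. pose proof (pow2_ge j). pose proof (pos_INR j).
    unfold lv in *. nra. }
  rewrite (cz_low phi Hphi) by auto. unfold lv at 1. rewrite (cz_low phi Hphi) by auto. simpl.
  f_equal. rewrite pow_add. unfold lv. field. lra.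
Qed.

Lemma val_indep t z M M' : Jint t -> Dhat phi fb t z -> lv (z M) < 1 -> lv (z M') < 1 ->
  val phi z M = val phi z M'.
Proof.
  intros Ht Hz H1 H2. destruct (le_lt_dec M M').
  - replace M' with (M + (M' - M))%nat by lia. symmetry. apply (val_tail t); auto.
  - replace M with (M' + (M - M'))%nat by lia. apply (val_tail t); auto.
Qed.

Lemma Gt_eq t z M : Jint t -> Dhat phi fb t z -> lv (z M) < 1/2 ->
  Gt phi z = (fst (val phi z M), mu (snd (val phi z M))).
Proof.
  intros Ht Hz HM. unfold Gt.
  pose proof (epsilon_spec (inhabits O) (fun n => lv (z n) < 1/2) (ex_intro _ M HM)) as He.
  simpl in He. rewrite (val_indep t z _ M); auto; lra.
Qed.

Lemma Gt_Psit t p s : Jint t -> onS p -> 0 <= s -> Gt phi (Psit phi fb t (p, s)) = (p, s).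
Proof.
  intros Ht Hp Hs. set (M := S (kf s)).
  pose proof (P1_level s M Hs ltac:(unfold M; lia)). pose proof (P1_level2 s M Hs ltac:(unfold M; lia)).
  assert (EM : Psit phi fb t (p, s) M = phi p (lam s / 2 ^ M)) by (apply P1; auto; unfold M; lia).
  rewrite (Gt_eq t _ M); auto.
  - unfold val. rewrite EM. rewrite (cz_low phi Hphi) by auto. unfold lv. rewrite (cz_low phi Hphi) by auto.
    cbn [fst snd]. f_equal. pose proof (pow2_pos M). replace (2 ^ M * (lam s / 2 ^ M)) with (lam s) by (field; lra).
    apply mu_lam; auto.
  - apply Dhat_Psit; auto.
  - rewrite EM, lv_phi; auto; lra.
Qed.

Lemma jI_inj a b : Iint a -> Iint b -> jI phi a = jI phi b -> a = b.
Proof.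
  intros Ha Hb E. unfold jI in E.
  destruct (Phi_inj phi Hphi (2 * a, 2 * sqrt (1 - a ^ 2), 1) (2 * b, 2 * sqrt (1 - b ^ 2), 1)) as [E1|[_ [_ E1]]];
    try (split; [apply jI_onS; auto|simpl; lra]); auto.
  - injection E1. intros. lra.
  - simpl in E1. lra.
Qed.

Lemma exists_low t z : Jint t -> Dhat phi fb t z -> ~ Ihat phi t z -> exists M, lv (z M) < 1/2.
Proof.
  intros Ht Hz HI. destruct (classic (exists n, lv (z n) < 1)) as [[n Hn]|Hno].
  - exists (S n). destruct (Hz n) as [_ E]. rewrite (z_Phi (z n)) in E by apply Hz.
    pose proof (cz_spec phi Hphi (z n) (proj1 (Hz n))) as [[Hq Hr] _].
    apply H_inv in E; auto; [|apply Hz|unfold lv in *; lra].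
    rewrite E, lv_phi; auto. lra. unfold lv in *; lra.
  - exfalso. apply HI.
    assert (Hl1 : forall n, lv (z n) = 1).
    { intros n. pose proof (lv_range phi Hphi (z n) (proj1 (Hz n))).
      assert (~ lv (z n) < 1) by (intros Hc; apply Hno; eauto). lra. }
    set (x := fun n => fst (fst (cz (z n))) / 2).
    assert (Hx : forall n, Iint (x n)).
    { intros n. pose proof (proj1 (proj1 (cz_spec phi Hphi (z n) (proj1 (Hz n))))) as Hq.
      destruct (onS_bound _ Hq) as [B _]. unfold x, Iint. unfold Rabs in B. destruct Rcase_abs in B; split; lra. }
    assert (Ez : forall n, z n = jI phi (x n)).
    { intros n. rewrite (z_Phi (z n)) at 1 by apply Hz. rewrite Hl1. unfold jI.
      apply (Phi_top phi Hphi). apply (cz_spec phi Hphi (z n) (proj1 (Hz n))). apply jI_onS; auto.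
      unfold x; simpl. field. }
    exists x. split; auto. intros n. split; auto. apply jI_inj; auto. apply ft_I; auto.
    destruct Hunw as [_ HW]. destruct (HW t Ht) as [_ [_ [_ [HU _]]]].
    rewrite <- HU by auto. rewrite <- Ez. destruct (Hz n) as [_ E]. rewrite <- Ez. exact E.
Qed.

Lemma pow2_lt_inv a b : 2 ^ a < 2 ^ b -> (a < b)%nat.
Proof. intros H. destruct (le_lt_dec b a); auto. pose proof (pow2_le b a l). lra. Qed.

Lemma Gt_inA t z M : Dhat phi fb t z -> lv (z M) < 1/2 -> inA (Gt phi z).
Proof.
  intros Hz HM. unfold Gt. set (M0 := epsilon _ _). unfold inA, val; simpl. split.
  apply (cz_spec phi Hphi (z M0) (proj1 (Hz M0))). apply mu_spec.
  pose proof (pow2_pos M0). pose proof (lv_range phi Hphi (z M0) (proj1 (Hz M0))). nra.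
Qed.

Lemma Psit_Gt t z : Jint t -> Dhat phi fb t z -> ~ Ihat phi t z -> Psit phi fb t (Gt phi z) = z.
Proof.
  intros Ht Hz HI. destruct (exists_low t z Ht Hz HI) as [M HM].
  rewrite (Gt_eq t z M) by auto. unfold val; simpl.
  destruct (cz_spec phi Hphi (z M) (proj1 (Hz M))) as [[Hq Hr] Ec].
  set (q := fst (cz (z M))) in *. set (r := lv (z M)) in *.
  pose proof (pow2_pos M).
  assert (Hx : 0 <= 2 ^ M * r) by (unfold r, lv in *; nra).
  destruct (mu_spec _ Hx) as [Hs Hls]. set (s := mu (2 ^ M * r)) in *.
  assert (Hk : (kf s <= M)%nat).
  { destruct (Rlt_dec s 1). rewrite (kf_unique s 0); simpl; lia || lra.
    pose proof (lam_hi s ltac:(lra)). destruct (le_lt_dec (kf s) M); auto.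
    pose proof (pow2_le M (kf s - 1) ltac:(lia)). nra. }
  symmetry. apply (threads_agree phi fb Hphi Hunw Hid t z _ M); auto.
  - apply Dhat_Psit; auto.
  - rewrite P1 by auto. rewrite Hls. rewrite (z_Phi (z M)) by apply Hz. f_equal. unfold r. field. lra.
  - unfold r in HM. lra.
Qed.

End Main4.

Lemma fin_min (P : nat -> R -> Prop) :
  (forall n d d', 0 < d' <= d -> P n d -> P n d') ->
  forall N, (forall n, (n <= N)%nat -> exists d, 0 < d /\ P n d) ->
  exists d, 0 < d /\ forall n, (n <= N)%nat -> P n d.
Proof.
  intros Hmono N. induction N; intros Hex.
  - destruct (Hex O (le_n _)) as [d [Hd HP]]. exists d. split; auto. intros n Hn. replace n with O by lia. auto.
  - destruct IHN as [d1 [Hd1 HP1]]. { intros n Hn. apply Hex. lia. }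
    destruct (Hex (S N) (le_n _)) as [d2 [Hd2 HP2]].
    exists (Rmin d1 d2). split. apply Rmin_pos; auto.
    intros n Hn. destruct (Nat.eq_dec n (S N)) as [->|Hne].
    + apply (Hmono _ d2); auto. split. apply Rmin_pos; auto. apply Rmin_r.
    + apply (Hmono _ d1); auto. split. apply Rmin_pos; auto. apply Rmin_l. apply HP1. lia.
Qed.

Section Main5.
Variable phi : R * R -> R -> R * R.
Variable fb : R -> R * R -> R * R.
Hypothesis Hphi : cyl_embedding phi.
Hypothesis Hunw : unwrapping phi fb.
Hypothesis Hid : forall t p s, Jint t -> onS p -> 0 <= s <= 3/4 -> fb t (phi p s) = phi p s.

Notation Phi := (Phi phi).
Notation H := (Hmap phi fb).
Notation Hit := (Hit phi fb).

Lemma Hit_S' m t x : Hit (S m) t x = Hit m t (H t x).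
Proof. induction m. reflexivity. change (Hit (S (S m)) t x) with (H t (Hit (S m) t x)). rewrite IHm. reflexivity. Qed.

Definition Pk (k n : nat) t p s : R * R :=
  match k with
  | O => phi p (s / 2 ^ n)
  | S _ => if (n <=? k)%nat then Hit (k - n) t (phi p ((s - INR k + 1) / 2))
           else phi p ((s - INR k + 1) / 2 / 2 ^ (n - k))
  end.

Lemma piece_eq k n t p s : Jint t -> onS p -> INR k <= s <= INR k + 1 -> Psit phi fb t (p, s) n = Pk k n t p s.
Proof.
  intros Ht Hp [Hs1 Hs2]. pose proof (pos_INR k).
  destruct (Rlt_dec s (INR k + 1)) as [Hlt|Hge].
  - assert (Hk : kf s = k) by (apply kf_unique; lra).
    destruct k as [|k'].
    + simpl in *. apply Psit_lo; lra.
    + rewrite Psit_hi. rewrite Hk. reflexivity. rewrite S_INR in Hs1. pose proof (pos_INR k'). lra.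
  - assert (Es : s = INR k + 1) by lra. subst s.
    assert (Hk : kf (INR k + 1) = S k) by (apply kf_unique; rewrite S_INR; lra).
    rewrite Psit_hi by lra. rewrite Hk. rewrite S_INR.
    replace ((INR k + 1 - (INR k + 1) + 1) / 2) with (1/2) by field.
    destruct k as [|k'].
    + simpl. replace (0 + 1) with 1 by ring.
      destruct n as [|[|n']]; simpl.
      * rewrite H_phi; auto; [|lra]. f_equal. unfold Rmin; destruct Rle_dec; lra.
      * f_equal. field.
      * f_equal. field. pose proof (pow2_pos n'). lra.
    + unfold Pk. replace (INR (S k') + 1 - INR (S k') + 1) with 2 by ring.
      destruct (Nat.leb_spec n (S k')).
      * rewrite (proj2 (Nat.leb_le n (S (S k')))) by lia.
        replace (S (S k') - n)%nat with (S (S k' - n)) by lia. rewrite Hit_S'.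
        rewrite H_phi; auto; [|lra]. f_equal. f_equal. unfold Rmin; destruct Rle_dec; lra.
      * destruct (Nat.leb_spec n (S (S k'))).
        -- replace n with (S (S k')) by lia. rewrite Nat.sub_diag. replace (S (S k') - S k')%nat with 1%nat by lia. simpl. f_equal. field.
        -- f_equal. replace (n - S k')%nat with (S (n - S (S k'))) by lia. simpl. field.
           pose proof (pow2_pos (n - S (S k'))). lra.
Qed.

Lemma phi_cont2 p0 s0 : onS p0 -> 0 <= s0 <= 1 -> forall e, 0 < e -> exists d, 0 < d /\
  forall p s, onS p -> 0 <= s <= 1 -> d2 p0 p < d -> Rabs (s0 - s) < d -> d2 (phi p0 s0) (phi p s) < e.
Proof.
  intros Hp Hs e He. destruct (Phi_cont phi Hphi (p0, s0) (conj Hp Hs) e He) as [d [Hd Hd']].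
  exists d. split; auto. intros p s Hp' Hs' H1 H2. apply (Hd' (p, s)). split; auto.
  unfold d3, dprod; simpl. apply Rmax_lub_lt; auto.
Qed.

Lemma aff_cont p0 s0 (sig : R -> R) : onS p0 -> 0 <= sig s0 <= 1 ->
  (forall s s', Rabs (sig s - sig s') <= Rabs (s - s')) ->
  forall e, 0 < e -> exists d, 0 < d /\
  forall p s, onS p -> 0 <= sig s <= 1 -> d2 p0 p < d -> Rabs (s0 - s) < d -> d2 (phi p0 (sig s0)) (phi p (sig s)) < e.
Proof.
  intros Hp Hs Hl e He. destruct (phi_cont2 p0 (sig s0) Hp Hs e He) as [d [Hd Hd']].
  exists d. split; auto. intros. apply Hd'; auto. eapply Rle_lt_trans; [apply Hl|]; auto.
Qed.

Lemma div_lip a c : 1 <= c -> forall s s', Rabs ((s - a) / c - (s' - a) / c) <= Rabs (s - s').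
Proof.
  intros Hc s s'. replace ((s - a) / c - (s' - a) / c) with ((s - s') / c) by (field; lra).
  unfold Rdiv. rewrite Rabs_mult, Rabs_inv, (Rabs_right c) by lra.
  pose proof (Rabs_pos (s - s')). apply Rle_trans with (Rabs (s - s') * 1); [|lra].
  apply Rmult_le_compat_l; auto. rewrite <- Rinv_1. apply Rinv_le_contravar; lra.
Qed.

Lemma piece_cont k n t0 p0 s0 : Jint t0 -> onS p0 -> INR k <= s0 <= INR k + 1 ->
  forall e, 0 < e -> exists d, 0 < d /\ forall t p s, Jint t -> onS p -> INR k <= s <= INR k + 1 ->
  Rabs (t0 - t) < d -> d2 p0 p < d -> Rabs (s0 - s) < d -> d2 (Pk k n t0 p0 s0) (Pk k n t p s) < e.
Proof.
  intros Ht0 Hp0 Hs0 e He. pose proof (pos_INR k). destruct k as [|k'].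
  - simpl in *. pose proof (pow2_pos n). pose proof (pow2_ge n). pose proof (pos_INR n).
    assert (Hr : forall s, 0 <= s <= 0 + 1 -> 0 <= s / 2 ^ n <= 1).
    { intros s Hs. split. apply Rdiv_le_0_compat'; lra.
      apply (Rmult_le_reg_r (2 ^ n)); auto. unfold Rdiv. rewrite Rmult_assoc, Rinv_l, Rmult_1_r by lra. lra. }
    destruct (aff_cont p0 s0 (fun s => (s - 0) / 2 ^ n) Hp0) with (e := e) as [d [Hd Hd']]; auto.
    + apply Hr in Hs0. unfold Rminus; rewrite Ropp_0, Rplus_0_r; auto.
    + apply div_lip. lra.
    + exists d. split; auto. intros t p s Ht Hp Hs _ Q1 Q2.
      specialize (Hd' p s Hp). unfold Rminus in Hd'. rewrite Ropp_0, !Rplus_0_r in Hd'. apply Hd'; auto.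
  - unfold Pk. set (k := S k') in *.
    destruct (Nat.leb_spec n k).
    + set (sig := fun s => (s - (INR k - 1)) / 1 / 2).
      assert (Esig : forall s, (s - INR k + 1) / 2 = sig s) by (intros; unfold sig; field).
      rewrite !Esig.
      assert (Hsig : forall s, INR k <= s <= INR k + 1 -> 0 <= sig s <= 1).
      { intros s Hs. unfold sig. replace ((s - (INR k - 1)) / 1 / 2) with ((s - INR k + 1) / 2) by field. lra. }
      pose proof (Hit_cont phi fb Hphi Hunw (k - n) t0 (phi p0 (sig s0)) Ht0 (phi_D phi Hphi p0 (sig s0) Hp0 (Hsig s0 Hs0)) e He) as [d1 [Hd1 HH]].
      destruct (aff_cont p0 s0 sig Hp0 (Hsig s0 Hs0)) with (e := d1) as [d2' [Hd2 Hd']]; auto.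
      { intros s s'. unfold sig. replace ((s - (INR k - 1)) / 1 / 2 - (s' - (INR k - 1)) / 1 / 2) with
          ((s - s') * / 2) by field. rewrite Rabs_mult, (Rabs_right (/ 2)) by lra.
        pose proof (Rabs_pos (s - s')). lra. }
      exists (Rmin d1 d2'). split. apply Rmin_pos; auto.
      intros t p s Ht Hp Hs Q1 Q2 Q3. apply HH; auto. apply phi_D; auto. try rewrite Esig; apply Hsig; auto.
      unfold dR. eapply Rlt_le_trans; [exact Q1|apply Rmin_l].
      rewrite Esig. apply Hd'; auto. eapply Rlt_le_trans; [exact Q2|apply Rmin_r]. eapply Rlt_le_trans; [exact Q3|apply Rmin_r].
    + pose proof (pow2_pos (n - k)). pose proof (pow2_ge (n - k)). pose proof (pos_INR (n - k)).
      set (sig := fun s => (s - (INR k - 1)) / (2 * 2 ^ (n - k))).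
      assert (Esig : forall s, (s - INR k + 1) / 2 / 2 ^ (n - k) = sig s) by (intros; unfold sig; field; lra).
      rewrite !Esig.
      assert (Hsig : forall s, INR k <= s <= INR k + 1 -> 0 <= sig s <= 1).
      { intros s Hs. unfold sig. split. apply Rdiv_le_0_compat'; lra.
        apply (Rmult_le_reg_r (2 * 2 ^ (n - k))); [lra|]. unfold Rdiv. rewrite Rmult_assoc, Rinv_l, Rmult_1_r by lra. lra. }
      destruct (aff_cont p0 s0 sig Hp0 (Hsig s0 Hs0)) with (e := e) as [d [Hd Hd']]; auto.
      { apply div_lip. lra. }
      exists d. split; auto. intros t p s Ht Hp Hs Q1 Q2 Q3. rewrite Esig. apply Hd'; auto.
Qed.

Lemma coord_cont n t0 p0 s0 : Jint t0 -> onS p0 -> 0 <= s0 ->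
  forall e, 0 < e -> exists d, 0 < d /\ forall t p s, Jint t -> onS p -> 0 <= s ->
  Rabs (t0 - t) < d -> d2 p0 p < d -> Rabs (s0 - s) < d ->
  d2 (Psit phi fb t0 (p0, s0) n) (Psit phi fb t (p, s) n) < e.
Proof.
  intros Ht0 Hp0 Hs0 e He. set (k0 := kf s0). pose proof (kf_spec s0 Hs0) as Hk0. fold k0 in Hk0.
  destruct (classic (s0 = INR k0 /\ (1 <= k0)%nat)) as [[E Hk1]|HB].
  - assert (Ek : INR (k0 - 1) = INR k0 - 1) by (rewrite minus_INR by lia; simpl; ring).
    destruct (piece_cont k0 n t0 p0 s0 Ht0 Hp0 ltac:(lra) e He) as [d1 [Hd1 P1']].
    destruct (piece_cont (k0 - 1) n t0 p0 s0 Ht0 Hp0 ltac:(lra) e He) as [d2' [Hd2 P2']].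
    exists (Rmin 1 (Rmin d1 d2')). split. repeat apply Rmin_pos; lra.
    intros t p s Ht Hp Hs Q1 Q2 Q3.
    pose proof (Rmin_l 1 (Rmin d1 d2')). pose proof (Rmin_r 1 (Rmin d1 d2')).
    pose proof (Rmin_l d1 d2'). pose proof (Rmin_r d1 d2').
    assert (Hsd : Rabs (s0 - s) < 1) by lra. unfold Rabs in Hsd; destruct Rcase_abs in Hsd.
    + rewrite !(piece_eq k0) by (auto; lra). apply P1'; auto; lra.
    + destruct (Rle_dec (INR k0) s).
      * rewrite !(piece_eq k0) by (auto; lra). apply P1'; auto; lra.
      * rewrite !(piece_eq (k0 - 1)) by (auto; lra). apply P2'; auto; lra.
  - assert (Hcase : INR k0 < s0 \/ k0 = O).
    { destruct (Rlt_dec (INR k0) s0); auto. right. destruct k0; auto. exfalso. apply HB. split; [lra|lia]. }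
    destruct (piece_cont k0 n t0 p0 s0 Ht0 Hp0 ltac:(lra) e He) as [d1 [Hd1 P1']].
    set (gap := if Rlt_dec (INR k0) s0 then s0 - INR k0 else 1).
    assert (Hgap : 0 < gap) by (unfold gap; destruct Rlt_dec; lra).
    exists (Rmin d1 (Rmin gap (INR k0 + 1 - s0))). split. repeat apply Rmin_pos; lra.
    intros t p s Ht Hp Hs Q1 Q2 Q3.
    pose proof (Rmin_l d1 (Rmin gap (INR k0 + 1 - s0))). pose proof (Rmin_r d1 (Rmin gap (INR k0 + 1 - s0))).
    pose proof (Rmin_l gap (INR k0 + 1 - s0)). pose proof (Rmin_r gap (INR k0 + 1 - s0)).
    assert (Hsr : INR k0 <= s <= INR k0 + 1).
    { unfold Rabs in Q3; destruct Rcase_abs in Q3; split; try lra;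
      destruct Hcase as [Hc|Hc]; [unfold gap in *; destruct Rlt_dec; lra | rewrite Hc; simpl; lra]. }
    rewrite !(piece_eq k0) by (auto; lra). apply P1'; auto; lra.
Qed.

End Main5.

Section Main6.
Variable phi : R * R -> R -> R * R.
Variable fb : R -> R * R -> R * R.
Hypothesis Hphi : cyl_embedding phi.
Hypothesis Hunw : unwrapping phi fb.
Hypothesis Hid : forall t p s, Jint t -> onS p -> 0 <= s <= 3/4 -> fb t (phi p s) = phi p s.

Notation cz := (cz phi).
Notation lv := (lv phi).

Lemma Gt_cont t0 z0 : Jint t0 -> Dhat phi fb t0 z0 -> ~ Ihat phi t0 z0 -> exists M, forall e, 0 < e ->
  exists d, 0 < d /\ forall t z, Jint t -> Dhat phi fb t z -> d2 (z0 M) (z M) < d -> d3 (Gt phi z0) (Gt phi z) < e.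
Proof.
  intros Ht0 Hz0 HI. destruct (exists_low phi fb Hphi Hunw Hid t0 z0 Ht0 Hz0 HI) as [M HM].
  exists M. intros e He.
  destruct (cz_spec phi Hphi (z0 M) (proj1 (Hz0 M))) as [Hc0 Ec0].
  set (c0 := cz (z0 M)) in *. set (r0 := lv (z0 M)) in *.
  assert (Hr0 : 0 <= r0) by apply (lv_range phi Hphi _ (proj1 (Hz0 M))).
  destruct (ULV_D phi Hphi (1/2 - r0)) as [d1 [Hd1 HU]]; [unfold r0 in *; lra|].
  pose proof (pow2_pos M) as HpM.
  destruct (mu_cont (2 ^ M * r0)) with (e := e) as [dm [Hdm Hmu]]; auto. nra.
  set (e' := Rmin e (dm / 2 ^ M)).
  assert (He' : 0 < e') by (apply Rmin_pos; auto; apply Rdiv_lt_0_compat; auto).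
  destruct (UC2 phi Hphi c0 Hc0 e' He') as [d2' [Hd2 HU2]].
  exists (Rmin d1 d2'). split. apply Rmin_pos; auto.
  intros t z Ht Hz Hd.
  pose proof (Rmin_l d1 d2'). pose proof (Rmin_r d1 d2').
  assert (HzM : lv (z M) < 1/2).
  { specialize (HU _ _ (proj1 (Hz0 M)) (proj1 (Hz M)) ltac:(lra)). unfold r0 in *.
    unfold Rabs in HU; destruct Rcase_abs in HU; lra. }
  rewrite (Gt_eq phi fb Hphi Hunw Hid t0 z0 M), (Gt_eq phi fb Hphi Hunw Hid t z M); auto.
  destruct (cz_spec phi Hphi (z M) (proj1 (Hz M))) as [Hc Ec].
  destruct (HU2 (cz (z M)) Hc) as [c1 [Hc1 [E1 Hd3]]]. { rewrite Ec0, Ec. lra. }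
  assert (c1 = c0).
  { apply (Phi_low phi Hphi); auto. unfold r0, lv in HM.
    pose proof (Phi_level phi Hphi c1 c0 Hc1 Hc0 E1). fold c0 in HM. lra. }
  subst c1. unfold d3, dprod in Hd3. apply Rmax_lt_iff in Hd3. destruct Hd3 as [Hq Hs].
  unfold val, d3, dprod. cbn [fst snd]. apply Rmax_lub_lt.
  - eapply Rlt_le_trans; [exact Hq|apply Rmin_l].
  - unfold dR. rewrite Rabs_minus_sym. change (lv (z0 M)) with r0. apply Hmu.
    + pose proof (lv_range phi Hphi _ (proj1 (Hz M))). nra.
    + assert (Hx : Rabs (lv (z M) - r0) < dm / 2 ^ M).
      { unfold r0, lv. fold c0. rewrite Rabs_minus_sym. unfold dR in Hs. eapply Rlt_le_trans; [exact Hs|apply Rmin_r]. }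
      replace (2 ^ M * lv (z M) - 2 ^ M * r0) with (2 ^ M * (lv (z M) - r0)) by ring.
      rewrite Rabs_mult, (Rabs_right (2 ^ M)) by lra.
      apply (Rmult_lt_compat_l (2 ^ M)) in Hx; auto. replace (2 ^ M * (dm / 2 ^ M)) with dm in Hx by (field; lra). lra.
Qed.

Lemma PihatC_dec w : PihatC phi fb w -> Jint (snd (w O)) /\ Dhat phi fb (snd (w O)) (fun n => fst (w n)) /\
  ~ Ihat phi (snd (w O)) (fun n => fst (w n)) /\ w = iota (snd (w O)) (fun n => fst (w n)).
Proof.
  intros [Hw HC].
  assert (Hsnd : forall n, snd (w n) = snd (w O)).
  { induction n; auto. destruct (Hw n) as [_ [_ E]]. rewrite <- IHn, <- E. reflexivity. }
  assert (Ew : w = iota (snd (w O)) (fun n => fst (w n))).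
  { apply functional_extensionality. intros n. unfold iota. rewrite <- (Hsnd n). apply surjective_pairing. }
  assert (HD : Dhat phi fb (snd (w O)) (fun n => fst (w n))).
  { intros n. destruct (Hw n) as [H1 [_ E]]. split; auto. rewrite <- E. unfold Hbig. simpl. rewrite (Hsnd (S n)). reflexivity. }
  split; [destruct (Hw O) as [_ [? _]]; auto|]. split; auto. split; auto.
  intros HI. apply HC. exists (snd (w O)), (fun n => fst (w n)). split; [apply Hw|]. auto.
Qed.

Definition Gbig (w : nat -> (R * R) * R) : ((R * R) * R) * R := (Gt phi (fun n => fst (w n)), snd (w O)).

End Main6.

Theorem mainTheorem7 :
  forall (phi : R * R -> R -> R * R) (fb : R -> R * R -> R * R),
    cyl_embedding phi ->
    unwrapping phi fb ->
    (forall t p s, Jint t -> onS p -> 0 <= s <= 3/4 -> fb t (phi p s) = phi p s) ->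
    homeo_on nbAJ nbPi inAJ (PihatC phi fb) (Psi phi fb) /\
    (forall b, inAJ b -> exists z, Dhat phi fb (snd b) z /\ Psi phi fb b = iota (snd b) z) /\
    (forall t, Jint t ->
       homeo_on nbA nbDh inA (fun z => Dhat phi fb t z /\ ~ Ihat phi t z) (Psit phi fb t)).
Proof.
  intros phi fb Hphi Hunw Hid.
  assert (Fw : forall t0 p0 s0, Jint t0 -> onS p0 -> 0 <= s0 -> forall N eps, 0 < eps ->
     exists d, 0 < d /\ forall t p s, Jint t -> onS p -> 0 <= s ->
       Rabs (t0 - t) < d -> d2 p0 p < d -> Rabs (s0 - s) < d ->
       forall n, (n <= N)%nat -> d2 (Psit phi fb t0 (p0, s0) n) (Psit phi fb t (p, s) n) < eps).
  { intros t0 p0 s0 Ht0 Hp0 Hs0 N eps Heps.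
    destruct (fin_min (fun n d => forall t p s, Jint t -> onS p -> 0 <= s ->
       Rabs (t0 - t) < d -> d2 p0 p < d -> Rabs (s0 - s) < d ->
       d2 (Psit phi fb t0 (p0, s0) n) (Psit phi fb t (p, s) n) < eps)) with (N := N) as [d [Hd HP]].
    - intros n d d' Hdd HP t p s Ht Hp Hs H1 H2 H3. apply HP; auto; lra.
    - intros n _. apply (coord_cont phi fb Hphi Hunw Hid); auto.
    - exists d. split; [auto|]. intros. apply HP; auto. }
  assert (Hinto : forall b, inAJ b -> PihatC phi fb (Psi phi fb b)).
  { intros [[p s] t] [[Hp Hs] Ht]. simpl in *. split.
    - intros n. unfold Psi, iota; simpl. destruct (Dhat_Psit phi fb Hphi Hunw Hid t p s Ht Hp Hs n) as [H1 H2].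
      split; auto. split; auto. unfold Hbig; simpl. rewrite H2. reflexivity.
    - intros [t' [z [Ht' [Hz [HI E]]]]]. unfold Psi in E; simpl in E.
      assert (Et : t = t') by (apply (f_equal (fun w => snd (w O))) in E; simpl in E; auto). subst t'.
      assert (Ez : Psit phi fb t (p, s) = z).
      { apply functional_extensionality. intros n. apply (f_equal (fun w => fst (w n))) in E. auto. }
      apply (not_Ihat_Psit phi fb Hphi t p s Ht Hp Hs). rewrite Ez. auto. }
  split; [|split].
  -
    split; [exact Hinto|]. split.
    + intros [[p0 s0] t0] [[Hp0 Hs0] Ht0] V [N [eps [Heps HV]]]. simpl in *.
      destruct (Fw t0 p0 s0 Ht0 Hp0 Hs0 N eps Heps) as [d [Hd HF]].
      exists (fun b => dprod (dprod d2 dR) dR ((p0, s0), t0) b < Rmin d eps). split.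
      { apply nbM_ball. apply Rmin_pos; auto. }
      intros [[p s] t] [[Hp Hs] Ht] Hb. simpl in *. apply HV. intros n Hn.
      unfold dprod in Hb; simpl in Hb. apply Rmax_lt_iff in Hb. destruct Hb as [Hb Htt]. apply Rmax_lt_iff in Hb.
      destruct Hb as [Hpp Hss]. pose proof (Rmin_l d eps). pose proof (Rmin_r d eps).
      unfold Psi, iota, dprod; simpl. apply Rmax_lub_lt.
      * apply HF; auto; unfold dR in *; lra.
      * lra.
    + exists (Gbig phi). split; [|split].
      * intros w Hw. destruct (PihatC_dec phi fb w Hw) as [Ht [Hz [HI Ew]]].
        destruct (exists_low phi fb Hphi Hunw Hid _ _ Ht Hz HI) as [M HM].
        pose proof (Gt_inA phi fb Hphi _ _ M Hz HM) as HA.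
        split. split; auto.
        unfold Psi, Gbig; simpl. rewrite (Psit_Gt phi fb Hphi Hunw Hid); auto.
      * intros [[p s] t] [[Hp Hs] Ht]. simpl in *. unfold Gbig, Psi, iota; simpl.
        change (fun n : nat => Psit phi fb t (p, s) n) with (Psit phi fb t (p, s)). rewrite (Gt_Psit phi fb Hphi Hunw Hid t p s); auto.
      * intros w Hw V [e [He HV]].
        destruct (PihatC_dec phi fb w Hw) as [Ht [Hz [HI Ew]]].
        destruct (Gt_cont phi fb Hphi Hunw Hid _ _ Ht Hz HI) as [M HM].
        destruct (HM e He) as [d [Hd Hd']].
        exists (fun w' => forall n, (n <= M)%nat -> dprod d2 dR (w n) (w' n) < Rmin d e). split.
        { exists M, (Rmin d e). split. apply Rmin_pos; auto. auto. }
        intros w' Hw' Hn. apply HV.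
        destruct (PihatC_dec phi fb w' Hw') as [Ht' [Hz' _]].
        unfold Gbig, dprod. cbn [fst snd]. apply Rmax_lub_lt.
        -- apply (Hd' _ _ Ht' Hz'). specialize (Hn M (le_n _)). unfold dprod in Hn. apply Rmax_lt_iff in Hn.
           pose proof (Rmin_l d e). lra.
        -- specialize (Hn O ltac:(lia)). unfold dprod in Hn. apply Rmax_lt_iff in Hn.
           pose proof (Rmin_r d e). lra.
  - intros [[p s] t] [[Hp Hs] Ht]. simpl in *. exists (Psit phi fb t (p, s)). split.
    apply Dhat_Psit; auto. reflexivity.
  - intros t Ht. split; [|split].
    + intros [p s] [Hp Hs]. simpl in *. split. apply Dhat_Psit; auto. apply not_Ihat_Psit; auto.
    + intros [p0 s0] [Hp0 Hs0] V [N [eps [Heps HV]]]. simpl in *.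
      destruct (Fw t p0 s0 Ht Hp0 Hs0 N eps Heps) as [d [Hd HF]].
      exists (fun a => dprod d2 dR (p0, s0) a < d). split. apply nbM_ball; auto.
      intros [p s] [Hp Hs] Ha. apply HV. intros n Hn. unfold dprod in Ha; simpl in Ha.
      apply Rmax_lt_iff in Ha. destruct Ha. apply HF; auto. rewrite Rminus_diag, Rabs_R0; auto.
    + exists (Gt phi). split; [|split].
      * intros z [Hz HI]. destruct (exists_low phi fb Hphi Hunw Hid _ _ Ht Hz HI) as [M HM].
        split. apply (Gt_inA phi fb Hphi t z M); auto. apply (Psit_Gt phi fb Hphi Hunw Hid); auto.
      * intros [p s] [Hp Hs]. apply (Gt_Psit phi fb Hphi Hunw Hid); auto.
      * intros z [Hz HI] V [e [He HV]].
        destruct (Gt_cont phi fb Hphi Hunw Hid _ _ Ht Hz HI) as [M HM].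
        destruct (HM e He) as [d [Hd Hd']].
        exists (fun z' => forall n, (n <= M)%nat -> d2 (z n) (z' n) < d). split.
        { exists M, d. split; auto. }
        intros z' [Hz' _] Hn. apply HV. apply (Hd' t); auto.
Qed.
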